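(* Let $G=(V,E)$ be a connected almost bipartite permutation graph that contains a hole, and let $C$, $m$, $c_i$, $A_i$, $B_i$, the linear orders $<_{A_i}$, $<_{B_i}$, the relation $\prec$ and the relations $<_{V'}$ be as described in the context. Let $i\le j$ be integers with $j-i=m-3$, and let $U=A[i,j]$ and $W=B[i,j]$. Then $G[U\cup W]$ is a bipartite permutation graph with bipartition classes $U$ and $W$. Moreover, $(U,<_U)$ and $(W,<_W)$ are strict linear orders that satisfy the adjacency and enclosure properties in $G[U\cup W]$.
   Context: All graphs are finite, simple, undirected; $N(v)$ is the open neighborhood. A hole is an induced cycle on at least five vertices. $T_2$ is the claw $K_{1,3}$ with each edge subdivided once; $X_2$ is a 4-cycle with a pendant vertex attached to each of three of its four vertices; $X_3$ is the domino (two 4-cycles sharing exactly one edge) with a pendant vertex attached to one endpoint of the shared edge. A graph is an almost bipartite permutation graph if it has no induced $T_2, X_2, X_3, K_3, C_5,\dots,C_9$. A bipartite permutation graph is a bipartite graph that is a permutation graph (intersection graph of segments with one endpoint on each of two parallel lines). Setting: $C$ is a shortest hole of $G$, $m=|C|$, $c_0,\dots,c_{m-1}$ its vertices in cyclic order, indices modulo $m$; $A_i=\{v: N(v)\cap C=\{c_{i-1},c_{i+1}\}\}$, $B_i=\{v: N(v)\cap C=\{c_i\}\}$ (indices modulo $m$). For integers $i\le j$, $A[i,j]$ is the union over $t=i,\dots,j$ of $A_t$ if $t-i$ is even and $B_t$ if $t-i$ is odd; $B[i,j]$ is the union over $t=i,\dots,j$ of $B_t$ if $t-i$ is even and $A_t$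 if $t-i$ is odd. On $A_i$ define the strict partial order $u<_{A_i}u'$ iff some $w\in B_{i-2}\cup A_{i-1}$ has $u\in N(w)$, $u'\notin N(w)$, or some $w\in A_{i+1}\cup B_{i+2}$ has $u'\in N(w)$, $u\notin N(w)$; on $B_i$: $w<_{B_i}w'$ iff some $u\in A_{i-2}\cup B_{i-1}$ has $w\in N(u)$, $w'\notin N(u)$, or some $u\in B_{i+1}\cup A_{i+2}$ has $w'\in N(u)$, $w\notin N(u)$. Each of these is then extended to an arbitrary (fixed) strict linear order, again denoted $<_{A_i}$, $<_{B_i}$. Define $v\prec v'$ iff for some $i$: $v,v'\in A_i$ are consecutive in $<_{A_i}$ with $v<_{A_i}v'$; or $v,v'\in B_i$ are consecutive in $<_{B_i}$ with $v<_{B_i}v'$; or $v$ is the maximum of $A_i$ and $v'$ the minimum of $B_{i+1}$; or $v$ is the maximum of $B_i$ and $v'$ the minimum of $A_{i+1}$. For $V'\subsetneq V$, $<_{V'}$ is the transitive closure of $\prec$ restricted to $V'$. For a bipartite graph with classes $U,W$, a linear order on $W$ has the adjacency property if for every $u\in U$ the set $N(u)$ is consecutive in it, and the enclosure property if for all $u,u'\in U$ with $N(u)\subseteq N(u')$ the set $N(u')\setminus N(u)$ is consecutive in it; symmetrically for orders on $U$.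
   Formalization: The relation ≺ also makes the maximum of $A_i$ precede the minimum of $A_{i+2}$ whenever $B_{i+1}$ is empty, and $<_{V'}$ is the transitive closure of the restriction of ≺ to $V'$. Each condition added here is assumed in the paper as well or is needed for the statement above to hold. *)

(* Defs.v *)
From mathcomp Require Import all_boot all_order all_algebra.
From Stdlib Require Import Relations.
Set Implicit Arguments. Unset Strict Implicit. Unset Printing Implicit Defensive.
Import Order.TTheory GRing.Theory Num.Theory.
Local Open Scope ring_scope.

Section Defs.
Variable T : finType.
Variable e : rel T.

Definition induced_copy (k : nat) (h : rel 'I_k) : Prop :=
  exists f : 'I_k -> T, injective f /\ forall a b, e (f a) (f b) = h a b.

Definition cycle_rel (k : nat) : rel 'I_k :=
  fun a b => (val b == (val a + 1) %% k)%N || (val a == (val b + 1) %% k)%N.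

Definition edges_rel (k : nat) (s : seq (nat * nat)) : rel 'I_k :=
  fun a b => ((val a, val b) \in s) || ((val b, val a) \in s).

(* T_2: claw with each edge subdivided once; centre 0 *)
Definition T2 : rel 'I_7 :=
  @edges_rel 7 [:: (0,1); (0,2); (0,3); (1,4); (2,5); (3,6)]%N.
(* X_2: 4-cycle 0-1-2-3 with pendants 4,5,6 at 0,1,2 *)
Definition X2 : rel 'I_7 :=
  @edges_rel 7 [:: (0,1); (1,2); (2,3); (3,0); (0,4); (1,5); (2,6)]%N.
(* X_3: domino (6-cycle 0..5 with chord 1-4, i.e. 4-cycles 0-1-4-5 and
   1-2-3-4 sharing edge 1-4) with pendant 6 at the endpoint 1 of the shared edge *)
Definition X3 : rel 'I_7 :=
  @edges_rel 7 [:: (0,1); (1,2); (2,3); (3,4); (4,5); (5,0); (1,4); (1,6)]%N.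

Definition almost_bip_perm : Prop :=
  ~ induced_copy T2 /\ ~ induced_copy X2 /\ ~ induced_copy X3 /\
  ~ induced_copy (@cycle_rel 3) /\
  (forall k : nat, (5 <= k <= 9)%N -> ~ induced_copy (@cycle_rel k)).

Definition connected_graph : Prop := forall x y : T, connect e x y.

Definition has_hole : Prop :=
  exists k : nat, (5 <= k)%N /\ induced_copy (@cycle_rel k).

Definition is_hole_enum (m : nat) (c : int -> T) : Prop :=
  (5 <= m)%N /\
  (forall k : int, c (k + m%:Z) = c k) /\
  (forall k l : int, c k = c l -> ((k - l) %% m%:Z)%Z = 0) /\
  (forall k l : int, e (c k) (c l) =
      (((k - l) %% m%:Z)%Z == 1) || (((l - k) %% m%:Z)%Z == 1)).

Definition shortest_hole (m : nat) (c : int -> T) : Prop :=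
  is_hole_enum m c /\
  (forall k : nat, (5 <= k < m)%N -> ~ induced_copy (@cycle_rel k)).

Variable c : int -> T.

Definition inC (v : T) : Prop := exists k : int, v = c k.

Definition Aset (i : int) (v : T) : Prop :=
  forall x, (inC x /\ e v x) <-> (x = c (i - 1) \/ x = c (i + 1)).
Definition Bset (i : int) (v : T) : Prop :=
  forall x, (inC x /\ e v x) <-> x = c i.

Definition Abig (i j : int) (v : T) : Prop :=
  exists n : nat, i + n%:Z <= j /\
    (if odd n then Bset (i + n%:Z) v else Aset (i + n%:Z) v).
Definition Bbig (i j : int) (v : T) : Prop :=
  exists n : nat, i + n%:Z <= j /\
    (if odd n then Aset (i + n%:Z) v else Bset (i + n%:Z) v).

Definition preA (i : int) (u u' : T) : Prop :=
  (exists w, (Bset (i - 2) w \/ Aset (i - 1) w) /\ e w u /\ ~ e w u') \/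
  (exists w, (Aset (i + 1) w \/ Bset (i + 2) w) /\ e w u' /\ ~ e w u).
Definition preB (i : int) (w w' : T) : Prop :=
  (exists u, (Aset (i - 2) u \/ Bset (i - 1) u) /\ e u w /\ ~ e u w') \/
  (exists u, (Bset (i + 1) u \/ Aset (i + 2) u) /\ e u w' /\ ~ e u w).

Definition strict_linear_on (S : T -> Prop) (lt : T -> T -> Prop) : Prop :=
  (forall x, S x -> ~ lt x x) /\
  (forall x y z, S x -> S y -> S z -> lt x y -> lt y z -> lt x z) /\
  (forall x y, S x -> S y -> x <> y -> lt x y \/ lt y x).

Variable m : nat.
Variables ltA ltB : int -> T -> T -> Prop.

(* ltA i, ltB i : fixed strict linear orders on A_i, B_i extending preA i, preB i;
   they depend only on the set, i.e. on i modulo m *)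
Definition linear_extensions : Prop :=
  (forall i u v, ltA (i + m%:Z) u v <-> ltA i u v) /\
  (forall i u v, ltB (i + m%:Z) u v <-> ltB i u v) /\
  (forall i, strict_linear_on (Aset i) (ltA i) /\
             (forall u v, Aset i u -> Aset i v -> preA i u v -> ltA i u v)) /\
  (forall i, strict_linear_on (Bset i) (ltB i) /\
             (forall u v, Bset i u -> Bset i v -> preB i u v -> ltB i u v)).

Definition consec (S : T -> Prop) (lt : T -> T -> Prop) (v v' : T) : Prop :=
  S v /\ S v' /\ lt v v' /\ ~ (exists w, S w /\ lt v w /\ lt w v').
Definition is_max (S : T -> Prop) (lt : T -> T -> Prop) (v : T) : Prop :=
  S v /\ forall w, S w -> w <> v -> lt w v.
Definition is_min (S : T -> Prop) (lt : T -> T -> Prop) (v : T) : Prop :=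
  S v /\ forall w, S w -> w <> v -> lt v w.

Definition prec (v v' : T) : Prop :=
  exists i : int,
    consec (Aset i) (ltA i) v v' \/
    consec (Bset i) (ltB i) v v' \/
    (is_max (Aset i) (ltA i) v /\ is_min (Bset (i + 1)) (ltB (i + 1)) v') \/
    (is_max (Aset i) (ltA i) v /\ (forall w, ~ Bset (i + 1) w) /\
       is_min (Aset (i + 2)) (ltA (i + 2)) v') \/
    (is_max (Bset i) (ltB i) v /\ is_min (Aset (i + 1)) (ltA (i + 1)) v').

Definition ltV (V' : T -> Prop) : T -> T -> Prop :=
  clos_trans T (fun x y => V' x /\ V' y /\ prec x y).

End Defs.

Section Bip.
Variable T : finType.
Variable e : rel T.

(* permutation graph on vertex set S: intersection graph of segments joining
   two parallel lines (endpoints p x on the first, q x on the second line) *)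
Definition perm_graph_on (S : T -> Prop) : Prop :=
  exists p q : T -> nat,
    (forall x y, S x -> S y -> p x = p y -> x = y) /\
    (forall x y, S x -> S y -> q x = q y -> x = y) /\
    (forall x y, S x -> S y -> x <> y ->
       (e x y <-> ((p x < p y)%N != (q x < q y)%N))).

Definition bip_perm_classes (U W : T -> Prop) : Prop :=
  (forall v, ~ (U v /\ W v)) /\
  (forall u u', U u -> U u' -> ~ e u u') /\
  (forall w w', W w -> W w' -> ~ e w w') /\
  perm_graph_on (fun v => U v \/ W v).

Definition nbhd (X Y : T -> Prop) (v : T) (w : T) : Prop :=
  (X w \/ Y w) /\ e v w.

Definition consecutive_in (Y : T -> Prop) (lt : T -> T -> Prop)
  (P : T -> Prop) : Prop :=
  (forall y, P y -> Y y) /\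
  (forall y1 y2 y3, Y y2 -> lt y1 y2 -> lt y2 y3 -> P y1 -> P y3 -> P y2).

Definition adjacency_prop (X Y : T -> Prop) (lt : T -> T -> Prop) : Prop :=
  forall x, X x -> consecutive_in Y lt (nbhd X Y x).

Definition enclosure_prop (X Y : T -> Prop) (lt : T -> T -> Prop) : Prop :=
  forall x x', X x -> X x' -> (forall w, nbhd X Y x w -> nbhd X Y x' w) ->
    consecutive_in Y lt (fun w => nbhd X Y x' w /\ ~ nbhd X Y x w).

End Bip.

(* Main.v *)
Require Import Defs.
From mathcomp Require Import all_boot all_order all_algebra.
From mathcomp Require Import zify.
From Stdlib Require Import Relations Classical ClassicalEpsilon FunctionalExtensionality PropExtensionality.
Set Implicit Arguments. Unset Strict Implicit. Unset Printing Implicit Defensive.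

Section Abs.
Variable T : finType.
Variable e : rel T.
Hypothesis e_sym : forall x y, e x y = e y x.
Variable o : T -> nat.

(* one-sided structural hypotheses: vertices of X look at blocks of Y *)
Record side (X Y : T -> Prop) (ltY : T -> T -> Prop) : Prop := Side {
  s_no : forall x x', X x -> X x' -> ~ e x x';
  s_R3 : forall x y, X x -> Y y -> e x y -> o y <= o x + 2 /\ o x <= o y + 2;
  s_R0 : forall x y, X x -> Y y -> o x = o y -> e x y;
  s_segl : forall v z z', X v -> Y z -> Y z' -> o z = o z' -> ltY z z' -> o v < o z ->
          e v z' -> e v z;
  s_segr : forall v z z', X v -> Y z -> Y z' -> o z = o z' -> ltY z z' -> o z < o v ->
          e v z -> e v z';
  s_R2a : forall v z z', X v -> Y z -> Y z' -> e v z -> o z = o v + 2 -> o z' = o v + 1 -> e v z';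
  s_R2b : forall v z z', X v -> Y z -> Y z' -> e v z -> o v = o z + 2 -> o v = o z' + 1 -> e v z';
  s_ord : forall y y', ltY y y' -> Y y /\ Y y' /\ o y <= o y';
  s_ne : forall x, X x -> exists y, Y y /\ e x y;
  s_disj : forall v, ~ (X v /\ Y v) }.

Section OneSide.
Variables (X Y : T -> Prop) (ltY : T -> T -> Prop).
Hypothesis s : side X Y ltY.

Lemma adj_side : adjacency_prop e X Y ltY.
Proof.
case: s => noX R3 R0 segl segr R2a R2b ordY neX disj.
move=> x Xx; split.
  move=> y [[Xy|Yy] exy] //; by case: (noX x y Xx Xy).
move=> y1 y2 y3 Yy2 l12 l23 [H1 e1] [H3 e3]; split; first by right.
have [Yy1 [_ o12]] := ordY _ _ l12.
have [_ [Yy3 o23]] := ordY _ _ l23.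
have [r1 r1'] := R3 _ _ Xx Yy1 e1.
have [r3 r3'] := R3 _ _ Xx Yy3 e3.
case: (ltngtP (o y2) (o x)) => h.
- case: (ltngtP (o y1) (o y2)) => h1; last first.
  + by apply: (segr x y1 y2) => //; rewrite h1.
  + lia.
  + apply: (R2b x y1 y2) => //; lia.
- case: (ltngtP (o y2) (o y3)) => h3; last first.
  + by apply: (segl x y2 y3).
  + lia.
  + apply: (R2a x y3 y2) => //; lia.
- by apply: R0.
Qed.
End OneSide.

Section TwoSides.
Variables (X Y : T -> Prop) (ltX ltY : T -> T -> Prop).
Hypothesis sXY : side X Y ltY.
Hypothesis sYX : side Y X ltX.

Lemma so1 u u' w w' : X u -> X u' -> Y w -> Y w' -> ltX u u' -> ltY w w' ->
  e u w' -> e u' w -> e u w.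
Proof.
case: sXY => noX R3 R0 segl segr R2a R2b ordY neX disj.
case: sYX => noY R3' R0' segl' segr' R2a' R2b' ordX neY disj'.
move=> Xu Xu' Yw Yw' luu lww euw' eu'w.
have [_ [_ oa]] := ordX _ _ luu.
have [_ [_ ob]] := ordY _ _ lww.
have [h1 h2] := R3 _ _ Xu Yw' euw'.
have [h3 h4] := R3 _ _ Xu' Yw eu'w.
case: (ltngtP (o u) (o w)) => h.
-
  case: (ltngtP (o w) (o w')) => h'.
  + apply: (R2a u w' w) => //; lia.
  + lia.
  + by apply: (segl u w w').
-
  have ew : e w u' by rewrite e_sym.
  rewrite e_sym.
  case: (ltngtP (o u) (o u')) => h'.
  + apply: (R2a' w u' u) => //; lia.
  + lia.
  + by apply: (segl' w u u') => //; rewrite -h'.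
- by apply: R0.
Qed.

Lemma so2 u u' w w' : X u -> X u' -> Y w -> Y w' -> ltX u u' -> ltY w w' ->
  e u w' -> e u' w -> e u' w'.
Proof.
case: sXY => noX R3 R0 segl segr R2a R2b ordY neX disj.
case: sYX => noY R3' R0' segl' segr' R2a' R2b' ordX neY disj'.
move=> Xu Xu' Yw Yw' luu lww euw' eu'w.
have [_ [_ oa]] := ordX _ _ luu.
have [_ [_ ob]] := ordY _ _ lww.
have [h1 h2] := R3 _ _ Xu Yw' euw'.
have [h3 h4] := R3 _ _ Xu' Yw eu'w.
case: (ltngtP (o w') (o u')) => h.
-
  case: (ltngtP (o w) (o w')) => h'.
  + apply: (R2b u' w w') => //; lia.
  + lia.
  + by apply: (segr u' w w') => //; rewrite h'.
-
  have ew : e w' u by rewrite e_sym.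
  rewrite e_sym.
  case: (ltngtP (o u) (o u')) => h'.
  + apply: (R2b' w' u u') => //; lia.
  + lia.
  + by apply: (segr' w' u u') => //; rewrite h'.
- by apply: R0 => //; rewrite h.
Qed.

Hypothesis linX : strict_linear_on X ltX.

Lemma enc_side : enclosure_prop e X Y ltY.
Proof.
have adj := adj_side sXY.
case: sXY => noX R3 R0 segl segr R2a R2b ordY neX disj.
case: linX => irr [tr tot].
move=> x x' Xx Xx' sub; split.
  by move=> y [[[Xy|Yy] ex] _] //; case: (noX x' y Xx' Xy ex).
move=> y1 y2 y3 Yy2 l12 l23 [n1 nn1] [n3 nn3].
split; first by case: (adj x' Xx') => _ H; apply: (H y1 y2 y3).
move=> [_ exy2].
have [Yy1 _] := ordY _ _ l12.
have [_ [Yy3 _]] := ordY _ _ l23.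
case: (classic (x = x')) => [exx|nxx].
  by subst x'; apply: nn1.
case: n1 => _ e1; case: n3 => _ e3.
case: (tot x x' Xx Xx' nxx) => l.
- apply: nn1; split; first by right.
  exact: (so1 Xx Xx' Yy1 Yy2 l l12 exy2 e1).
- apply: nn3; split; first by right.
  exact: (so2 Xx' Xx Yy2 Yy3 l l23 e3 exy2).
Qed.
End TwoSides.
End Abs.

Definition pb (P : Prop) : bool := if excluded_middle_informative P then true else false.
Lemma pbE (P : Prop) : pb P <-> P.
Proof. by rewrite /pb; case: excluded_middle_informative. Qed.

Section Rank.
Variable T : finType.

Lemma rank_of (S : T -> Prop) (R : T -> T -> Prop) : strict_linear_on S R ->
  exists p : T -> nat, (forall x y, S x -> S y -> p x = p y -> x = y) /\
    (forall x y, S x -> S y -> (R x y <-> (p x < p y)%N)).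
Proof.
case=> irr [tr tot].
pose p x := #|[pred y | pb (S y /\ R y x)]|.
have mono : forall x y, S x -> S y -> R x y -> (p x < p y)%N.
  move=> x y Sx Sy Rxy; apply: proper_card; apply/properP; split.
    apply/subsetP=> z; rewrite !inE => /pbE [Sz Rzx]; apply/pbE; split=> //.
    exact: (tr z x y).
  exists x; rewrite !inE; first by apply/pbE.
  by apply/negP => /pbE [_ /irr].
exists p; split.
  move=> x y Sx Sy pxy; apply: NNPP => nxy.
  case: (tot x y Sx Sy nxy) => H.
    by have := mono _ _ Sx Sy H; rewrite pxy ltnn.
  by have := mono _ _ Sy Sx H; rewrite pxy ltnn.
move=> x y Sx Sy; split; first exact: mono.
move=> lt; case: (classic (x = y)) => [exy|nxy]; first by subst; rewrite ltnn in lt.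
case: (tot x y Sx Sy nxy) => // Ryx.
have := mono _ _ Sy Sx Ryx; lia.
Qed.
End Rank.

Section Merge.
Variable T : finType.
Variables (X Y : T -> Prop) (ltX ltY : T -> T -> Prop) (F : T -> T -> Prop).
Hypothesis linX : strict_linear_on X ltX.
Hypothesis linY : strict_linear_on Y ltY.
Hypothesis disj : forall v, ~ (X v /\ Y v).
Hypothesis mono1 : forall u1 u2 w, X u1 -> X u2 -> Y w -> ltX u1 u2 -> F u2 w -> F u1 w.
Hypothesis mono2 : forall u w1 w2, X u -> Y w1 -> Y w2 -> F u w1 -> ltY w1 w2 -> F u w2.

Definition mer x y :=
  [\/ X x /\ X y /\ ltX x y, Y x /\ Y y /\ ltY x y, X x /\ Y y /\ F x y |
      Y x /\ X y /\ ~ F y x].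

Lemma mer_lin : strict_linear_on (fun v => X v \/ Y v) mer.
Proof.
case: linX => irrX [trX totX]; case: linY => irrY [trY totY].
have dj : forall v, X v -> Y v -> False by move=> v a b; apply: (disj (conj a b)).
split.
  by move=> x _ [[_ [_ /irrX]]|[_ [_ /irrY]]|[a [b _]]|[a [b _]]] //; apply: (dj x).
split.
  move=> x y z Sx Sy Sz [[Xx [Xy l1]]|[Yx [Yy l1]]|[Xx [Yy l1]]|[Yx [Xy l1]]]
                      [[Xy' [Xz l2]]|[Yy' [Yz l2]]|[Xy' [Yz l2]]|[Yy' [Xz l2]]];
   try solve [exfalso; apply: (dj y) => //].
  - by constructor 1; split=> //; split=> //; apply: (trX x y z).
  - by constructor 3; split=> //; split=> //; apply: (mono1 Xx Xy Yz).
  - by constructor 2; split=> //; split=> //; apply: (trY x y z).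
  - by constructor 4; split=> //; split=> // Fzx; apply: l2; apply: (mono2 Xz Yx Yy).
  - by constructor 3; split=> //; split=> //; apply: (mono2 Xx Yy Yz).
  - constructor 1; split=> //; split=> //.
    case: (classic (x = z)) => [exz|nxz]; first by subst z.
    case: (totX x z Xx Xz nxz) => // lzx; exfalso; apply: l2.
    exact: (mono1 Xz Xx Yy).
  - constructor 4; split=> //; split=> // Fzx; apply: l1.
    exact: (mono1 Xy Xz Yx).
  - constructor 2; split=> //; split=> //.
    case: (classic (x = z)) => [exz|nxz]; first by subst z.
    case: (totY x z Yx Yz nxz) => // lzx; exfalso; apply: l1.
    exact: (mono2 Xy Yz Yx).
move=> x y [Xx|Yx] [Xy|Yy] nxy.
- by case: (totX x y Xx Xy nxy) => h; [left; constructor 1 | right; constructor 1].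
- by case: (classic (F x y)) => h; [left; constructor 3 | right; constructor 4].
- by case: (classic (F y x)) => h; [right; constructor 3 | left; constructor 4].
- by case: (totY x y Yx Yy nxy) => h; [left; constructor 2 | right; constructor 2].
Qed.
End Merge.

Section PermG.
Variable T : finType.
Variable e : rel T.
Hypothesis e_sym : forall x y, e x y = e y x.
Variable o : T -> nat.
Variables (X Y : T -> Prop) (ltX ltY : T -> T -> Prop).
Hypothesis sXY : side e o X Y ltY.
Hypothesis sYX : side e o Y X ltX.
Hypothesis linX : strict_linear_on X ltX.
Hypothesis linY : strict_linear_on Y ltY.

Definition Lle u w := exists z, Y z /\ e u z /\ (z = w \/ ltY z w).
Definition Rlt u w := forall z, Y z -> e u z -> ltY z w.

Lemma perm_main : perm_graph_on e (fun v => X v \/ Y v).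
Proof.
have adj := adj_side sXY.
case: linX => irrX [trX totX]; case: linY => irrY [trY totY].
have disj : forall v, ~ (X v /\ Y v) by case: sXY.
have noX : forall x x', X x -> X x' -> ~ e x x' by case: sXY.
have noY : forall x x', Y x -> Y x' -> ~ e x x' by case: sYX.
have neX : forall x, X x -> exists y, Y y /\ e x y by case: sXY.
have m1L : forall u1 u2 w, X u1 -> X u2 -> Y w -> ltX u1 u2 -> Lle u2 w -> Lle u1 w.
  move=> u1 u2 w Xu1 Xu2 Yw l [z [Yz [ez hz]]].
  have [z1 [Yz1 ez1]] := neX u1 Xu1.
  case: (classic (z1 = z)) => [ezz|nz]; first by subst z1; exists z.
  case: (totY z1 z Yz1 Yz nz) => lz.
    exists z1; split=> //; split=> //; right.
    by case: hz => [<-|lzw] //; apply: (trY z1 z w).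
  by exists z; split=> //; split=> //; apply: (so1 e_sym sXY sYX Xu1 Xu2 Yz Yz1 l lz ez1 ez).
have m2L : forall u w1 w2, X u -> Y w1 -> Y w2 -> Lle u w1 -> ltY w1 w2 -> Lle u w2.
  move=> u w1 w2 Xu Yw1 Yw2 [z [Yz [ez hz]]] l; exists z; split=> //; split=> //; right.
  by case: hz => [->|lz] //; apply: (trY z w1 w2).
have m1R : forall u1 u2 w, X u1 -> X u2 -> Y w -> ltX u1 u2 -> Rlt u2 w -> Rlt u1 w.
  move=> u1 u2 w Xu1 Xu2 Yw l R z Yz ez.
  have [z2 [Yz2 ez2]] := neX u2 Xu2.
  case: (classic (z = z2)) => [->|nz]; first exact: R.
  case: (totY z z2 Yz Yz2 nz) => lz.
    by apply: (trY z z2 w) => //; apply: R.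
  apply: R => //; exact: (so2 e_sym sXY sYX Xu1 Xu2 Yz2 Yz l lz ez ez2).
have m2R : forall u w1 w2, X u -> Y w1 -> Y w2 -> Rlt u w1 -> ltY w1 w2 -> Rlt u w2.
  move=> u w1 w2 Xu Yw1 Yw2 R l z Yz ez; apply: (trY z w1 w2) => //; exact: R.
have cross1 : forall x y, X x -> Y y -> e x y -> Lle x y /\ ~ Rlt x y.
  move=> x y Xx Yy exy; split; first by exists y; split=> //; split=> //; left.
  by move=> R; apply: (irrY y Yy); apply: R.
have cross2 : forall x y, X x -> Y y -> ~ e x y -> (Lle x y <-> Rlt x y).
  move=> x y Xx Yy nexy; split.
    move=> [z [Yz [ez [ezy|lzy]]]]; first by subst z.
    move=> z' Yz' ez'.
    case: (classic (z' = y)) => [ezy'|nzy]; first by subst z'.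
    case: (totY z' y Yz' Yy nzy) => // lyz'.
    exfalso; apply: nexy; case: (adj x Xx) => _ H.
    by case: (H z y z' Yy lzy lyz'); [split=> //; right | split=> //; right|].
  move=> R; have [z [Yz ez]] := neX x Xx; exists z; split=> //; split=> //; right.
  exact: R.
have [p [pinj pord]] := rank_of (mer_lin linX linY disj m1L m2L).
have [q [qinj qord]] := rank_of (mer_lin linX linY disj m1R m2R).
exists p, q; split; first exact: pinj.
split; first exact: qinj.
move=> x y Sx Sy nxy.
have Pp := pord x y Sx Sy; have Pq := qord x y Sx Sy.
have key : e x y <-> ~ (mer X Y ltX ltY Lle x y <-> mer X Y ltX ltY Rlt x y).
  have merXY : forall F, X x -> Y y -> (mer X Y ltX ltY F x y <-> F x y).
    move=> F Xx Yy; split; last by move=> h; constructor 3.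
    by case=> [[_ [Xy _]]|[Yx _]|[_ [_ h]]|[Yx _]] //; exfalso;
      [apply: (disj y) | apply: (disj x) | apply: (disj x)].
  have merYX : forall F, Y x -> X y -> (mer X Y ltX ltY F x y <-> ~ F y x).
    move=> F Yx Xy; split; last by move=> h; constructor 4.
    by case=> [[Xx _]|[_ [Yy _]]|[Xx _]|[_ [_ h]]] //; exfalso;
      [apply: (disj x) | apply: (disj y) | apply: (disj x)].
  have merXX : forall F, X x -> X y -> (mer X Y ltX ltY F x y <-> ltX x y).
    move=> F Xx Xy; split; last by move=> h; constructor 1.
    by case=> [[_ [_ h]]|[Yx _]|[_ [Yy _]]|[Yx _]] //; exfalso;
      [apply: (disj x) | apply: (disj y) | apply: (disj x)].
  have merYY : forall F, Y x -> Y y -> (mer X Y ltX ltY F x y <-> ltY x y).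
    move=> F Yx Yy; split; last by move=> h; constructor 2.
    by case=> [[Xx _]|[_ [_ h]]|[Xx _]|[_ [Xy _]]] //; exfalso;
      [apply: (disj x) | apply: (disj x) | apply: (disj y)].
  case: Sx => [Xx|Yx]; case: Sy => [Xy|Yy].
  - rewrite !merXX //; split=> [exy|]; first by case: (noX x y Xx Xy exy).
    by case; split.
  - rewrite !merXY //; split.
      by move=> exy [h _]; case: (cross1 x y Xx Yy exy) => L nR; apply: nR; apply: h.
    move=> h; apply: NNPP => nexy; apply: h; exact: cross2.
  - rewrite !merYX // e_sym; split.
      move=> exy [h1 h2]; case: (cross1 y x Xy Yx exy) => L nR.
      exact: (h2 nR L).
    move=> h; apply: NNPP => nexy; apply: h.
    have [h1 h2] := cross2 y x Xy Yx nexy.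
    by split=> a b; [apply: a; apply: h2 | apply: a; apply: h1].
  - rewrite !merYY //; split=> [exy|]; first by case: (noY x y Yx Yy exy).
    by case; split.
rewrite key.
case bp: (p x < p y)%N; case bq: (q x < q y)%N; rewrite bp in Pp; rewrite bq in Pq => /=.
- by split=> // [[]]; split; [move=> _; apply/Pq | move=> _; apply/Pp].
- split=> // _ [a _]; have := Pq.1 (a (Pp.2 isT)); done.
- split=> // _ [_ b]; have := Pp.1 (b (Pq.2 isT)); done.
- split=> // [[]]; split=> h; [by have := Pp.1 h | by have := Pq.1 h].
Qed.
End PermG.

Section Gen.
Variable T : finType.
Variables (S : T -> Prop) (lt : T -> T -> Prop).
Hypothesis lin : strict_linear_on S lt.

Definition betw x y := [pred z | pb (S z /\ lt x z /\ lt z y)].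

Lemma consec_chain x y : S x -> S y -> lt x y -> clos_trans T (consec S lt) x y.
Proof.
case: lin => irr [tr tot].
move: {2}#|betw x y| (leqnn #|betw x y|) => n.
elim: n x y => [|n IH] x y hn Sx Sy lxy.
  have h0 : #|betw x y| = 0 by lia.
  apply: t_step; split=> //; split=> //; split=> // [[w [Sw [l1 l2]]]].
  have hw : w \in betw x y by rewrite inE; apply/pbE.
  by have := card0_eq h0 w; rewrite hw.
case: (posnP #|betw x y|) => h0.
  apply: t_step; split=> //; split=> //; split=> // [[w [Sw [l1 l2]]]].
  have hw : w \in betw x y by rewrite inE; apply/pbE.
  by have := card0_eq h0 w; rewrite hw.
have [w hw] := card_gt0P h0.
move: (hw); rewrite inE => /pbE [Sw [l1 l2]].
have sub1 : #|betw x w| < #|betw x y|.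
  apply: proper_card; apply/properP; split.
    apply/subsetP=> z; rewrite !inE => /pbE [Sz [a b]]; apply/pbE; split=> //; split=> //.
    exact: (tr z w y).
  exists w => //; rewrite inE; apply/negP => /pbE [_ [_ /irr]]; exact.
have sub2 : #|betw w y| < #|betw x y|.
  apply: proper_card; apply/properP; split.
    apply/subsetP=> z; rewrite !inE => /pbE [Sz [a b]]; apply/pbE; split=> //; split=> //.
    exact: (tr x w z).
  exists w => //; rewrite inE; apply/negP => /pbE [_ [/irr]]; exact.
apply: (t_trans _ _ _ w).
  apply: IH => //; lia.
apply: IH => //; lia.
Qed.

Lemma max_ex : (exists v, S v) -> exists M, is_max S lt M.
Proof.
case=> v0 Sv0; have [p [pinj pord]] := rank_of lin.
case: lin => irr [tr tot].
have P0 : pb (S v0) by apply/pbE.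
case: (@arg_maxnP T v0 (fun v => pb (S v)) p P0) => M /pbE SM Mmax.
exists M; split=> // w Sw nwM.
case: (tot w M Sw SM nwM) => // lMw.
have := (pord M w SM Sw).1 lMw; have := Mmax w (proj2 (pbE (S w)) Sw); lia.
Qed.

Lemma min_ex : (exists v, S v) -> exists M, is_min S lt M.
Proof.
case=> v0 Sv0; have [p [pinj pord]] := rank_of lin.
case: lin => irr [tr tot].
have P0 : pb (S v0) by apply/pbE.
case: (@arg_minnP T v0 (fun v => pb (S v)) p P0) => M /pbE SM Mmin.
exists M; split=> // w Sw nwM.
case: (tot w M Sw SM nwM) => // lwM.
have := (pord w M Sw SM).1 lwM; have := Mmin w (proj2 (pbE (S w)) Sw); lia.
Qed.
End Gen.

Import Order.TTheory GRing.Theory Num.Theory.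
Local Open Scope ring_scope.

Lemma modz_sm (d M : int) : - M < d < M ->
  (d %% M)%Z = if 0 <= d then d else d + M.
Proof.
move=> /andP [h1 h2]; case: ifP => h0.
  by apply: modz_small; rewrite h0 h2.
rewrite -(modzDr d M) modz_small //; apply/andP; split; lia.
Qed.

Section Conc.
Variable T : finType.
Variable e : rel T.
Hypothesis e_sym : forall x y, e x y = e y x.
Hypothesis e_irr : forall x, e x x = false.
Variable m : nat.
Variable c : int -> T.
Hypothesis Hhole : is_hole_enum e m c.

Lemma m5 : (5 <= m)%N. Proof. by case: Hhole. Qed.

Lemma c_perN (k : int) (n : nat) : c (k + (n%:Z) * m%:Z) = c k.
Proof.
case: Hhole => _ [per _].
elim: n k => [|n IH] k; first by rewrite mul0r addr0.
by rewrite -[n.+1]addn1 PoszD mulrDl mul1r addrA per IH.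
Qed.

Lemma c_per (k z : int) : c (k + z * m%:Z) = c k.
Proof.
case: z => n; first exact: c_perN.
rewrite -(c_perN (k + Negz n * m%:Z) n.+1); congr c.
rewrite NegzE; lia.
Qed.

Lemma c_eq (r s : int) : c r = c s <-> ((r - s) %% m%:Z)%Z = 0.
Proof.
case: Hhole => _ [_ [inj _]]; split; first exact: inj.
move=> h; rewrite -(c_per s ((r - s) %/ m%:Z)%Z); congr c.
have := divz_eq (r - s) m%:Z; rewrite h addr0 => <-; lia.
Qed.

Lemma c_eq_sm (r s : int) : - m%:Z < r - s < m%:Z -> (c r = c s <-> r = s).
Proof.
move=> b; rewrite c_eq modz_sm //; case: ifP => [h|/negbT h]; split; lia.
Qed.

Lemma e_cc (r s : int) : e (c r) (c s) =
   (((r - s) %% m%:Z)%Z == 1) || (((s - r) %% m%:Z)%Z == 1).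
Proof. by case: Hhole => _ [_ [_ h]]; apply: h. Qed.

Lemma e_cc_sm (r s : int) : - m%:Z < r - s < m%:Z ->
  e (c r) (c s) <-> (r - s = 1 \/ s - r = 1 \/ r - s = m%:Z - 1 \/ s - r = m%:Z - 1).
Proof.
move=> b; rewrite e_cc; have b' : - m%:Z < s - r < m%:Z by lia.
rewrite (modz_sm b) (modz_sm b'); split.
  case/orP; case: ifP => [h|/negbT h] /eqP; lia.
move=> h; have hm := m5; apply/orP; case: ifP => [h1|/negbT h1]; case: ifP => [h2|/negbT h2];
  case: h => [h|[h|[h|h]]]; solve [left; apply/eqP; lia | right; apply/eqP; lia | exfalso; lia].
Qed.

Lemma cyc_copy (k : nat) (g : nat -> T) : (3 <= k)%N ->
  (forall a b, (a < k)%N -> (b < k)%N -> g a = g b -> a = b) ->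
  (forall a b, (a < k)%N -> (b < k)%N -> (e (g a) (g b) <->
     (b = a + 1 \/ a = b + 1 \/ (a = 0 /\ b = k - 1) \/ (b = 0 /\ a = k - 1))%N)) ->
  induced_copy e (@cycle_rel k).
Proof.
move=> k3 ginj gadj; exists (fun a => g (val a)); split.
  by move=> a b /(ginj _ _ (ltn_ord a) (ltn_ord b)) /val_inj.
case=> a ha; case=> b hb /=.
have md : forall x, (x < k)%N -> ((x + 1) %% k = if x + 1 == k then 0 else x + 1)%N.
  move=> x hx; case: ifP => [/eqP ->|/negbT h]; first by rewrite modnn.
  by rewrite modn_small //; lia.
rewrite /cycle_rel (md _ ha) (md _ hb).
have G := gadj _ _ ha hb; rewrite /=.
apply/idP/idP.
  move/G => H; apply/orP.
  case: ifP => [/eqP h1|/negbT h1]; case: ifP => [/eqP h2|/negbT h2];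
  case: H => [H|[H|[H|H]]];
  solve [left; apply/eqP; lia | right; apply/eqP; lia | exfalso; lia].
move=> H; apply/G; move: H; case: ifP => [/eqP h1|/negbT h1]; case: ifP => [/eqP h2|/negbT h2];
  case/orP => /eqP H; lia.
Qed.

Lemma m10 : ~ induced_copy e (@cycle_rel 3) ->
  (forall k : nat, (5 <= k <= 9)%N -> ~ induced_copy e (@cycle_rel k)) -> (10 <= m)%N.
Proof.
move=> _ H; case: (leqP 10 m) => // hm; exfalso.
have h5 := m5.
apply: (H m); first by lia.
apply: (cyc_copy (g := fun a => c a%:Z)); first by lia.
  move=> a b ha hb /c_eq_sm h; have: (a%:Z = b%:Z) by apply: h; lia.
  by case.
move=> a b ha hb; rewrite e_cc_sm; last by lia.
split; lia.
Qed.

Section Arc.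
Variables (x y : T) (p : int) (L : nat).
Hypothesis hL : (L + 2 < m)%N.
Hypothesis exy : e x y.
Hypothesis nxy : x <> y.
Hypothesis exp : e x (c p).
Hypothesis eyq : e y (c (p + L%:Z)).
Hypothesis nx : forall r : nat, (0 < r <= L)%N -> ~ e x (c (p + r%:Z)).
Hypothesis ny : forall r : nat, (r < L)%N -> ~ e y (c (p + r%:Z)).
Hypothesis dx : forall r : nat, (r <= L)%N -> x <> c (p + r%:Z).
Hypothesis dy : forall r : nat, (r <= L)%N -> y <> c (p + r%:Z).

Definition garc (a : nat) : T :=
  if a == 0%N then x else if a == (L + 2)%N then y else c (p + (a - 1)%N%:Z).

Lemma garcE a : (a < L + 3)%N ->
  [\/ a = 0%N /\ garc a = x, a = (L + 2)%N /\ garc a = y |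
      (0 < a < L + 2)%N /\ garc a = c (p + (a - 1)%N%:Z)].
Proof.
move=> ha; rewrite /garc; case: eqP => [->|h0]; first by constructor 1.
case: eqP => [->|h1]; first by constructor 2.
constructor 3; split=> //; lia.
Qed.

Lemma arc_copy : induced_copy e (@cycle_rel (L + 3)).
Proof.
have hm := m5.
have ey : forall r : nat, (r <= L)%N -> e y (c (p + r%:Z)) <-> r = L.
  move=> r hr; split; last by move=> ->.
  move=> h; case: (ltngtP r L) => // hr'; [by case: (ny hr') | lia].
have ex : forall r : nat, (r <= L)%N -> e x (c (p + r%:Z)) <-> r = 0%N.
  move=> r hr; split; last by move=> ->; rewrite addr0.
  move=> h; case: (posnP r) => // hr'; case: (nx (r := r)) => //; lia.
apply: (cyc_copy (g := garc)); first by lia.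
  move=> a b ha hb; case: (garcE ha) => [[a0 ->]|[a0 ->]|[a0 ->]];
  case: (garcE hb) => [[b0 ->]|[b0 ->]|[b0 ->]] => h.
  - lia.
  - by case: nxy.
  - by case: (dx (r := (b - 1)%N)) => //; lia.
  - by case: nxy.
  - lia.
  - by case: (dy (r := (b - 1)%N)) => //; lia.
  - by case: (dx (r := (a - 1)%N)) => //; lia.
  - by case: (dy (r := (a - 1)%N)) => //; lia.
  - move/c_eq_sm: h => h; have: (p + (a - 1)%N%:Z = p + (b - 1)%N%:Z) by apply: h; lia.
    lia.
move=> a b ha hb; case: (garcE ha) => [[a0 ->]|[a0 ->]|[a0 ->]];
  case: (garcE hb) => [[b0 ->]|[b0 ->]|[b0 ->]].
- rewrite e_irr; split=> //; lia.
- split=> // _; lia.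
- rewrite ex; last by lia. split; lia.
- rewrite e_sym; split=> // _; lia.
- rewrite e_irr; split=> //; lia.
- rewrite ey; last by lia. split; lia.
- rewrite e_sym ex; last by lia. split; lia.
- rewrite e_sym ey; last by lia. split; lia.
- rewrite e_cc_sm; last by lia. split; lia.
Qed.
End Arc.

Lemma c_shift (a b t : int) : c a = c b -> c (a + t) = c (b + t).
Proof. by move=> /c_eq h; apply/c_eq; rewrite -h; congr (_ %% _)%Z; lia. Qed.

Lemma mod1_iff (d : int) : (((d %% m%:Z)%Z == 1) = (((d - 1) %% m%:Z)%Z == 0)).
Proof.
have hm := m5.
have -> : ((d - 1) %% m%:Z = ((d %% m%:Z)%Z - 1) %% m%:Z)%Z by rewrite modzDml.
have h0 : 0 <= (d %% m%:Z)%Z by apply: modz_ge0; lia.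
have h1 : (d %% m%:Z)%Z < m%:Z by apply: ltz_pmod; lia.
rewrite (@modz_sm ((d %% m%:Z)%Z - 1)); last by lia.
by case: ifP => [/idP h|/negbT h]; apply/eqP/eqP; lia.
Qed.

Lemma e_ccE (a b : int) : e (c a) (c b) <-> (c b = c (a + 1) \/ c b = c (a - 1)).
Proof.
have E : forall u v : T, u = v <-> v = u by split.
rewrite [c b = c (a - 1)]E e_cc !c_eq !mod1_iff; split.
  by case/orP=> /eqP h; [right|left]; rewrite -h; congr (_ %% _)%Z; lia.
by case=> h; apply/orP; [right|left]; apply/eqP; rewrite -h; congr (_ %% _)%Z; lia.
Qed.

Lemma cA (k : int) : Aset e c k (c k).
Proof.
move=> z; split.
  by case=> [[r ->]] /e_ccE [->|->]; [right|left].
case=> ->; (split; first by eexists); apply/e_ccE; [right|left]; congr c; lia.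
Qed.

Lemma A_nbr (k r : int) v : Aset e c k v -> (e v (c r) <-> (c r = c (k - 1) \/ c r = c (k + 1))).
Proof.
move=> A; split; first by move=> h; apply/A; split=> //; exists r.
by move/A => [_].
Qed.

Lemma B_nbr (k r : int) v : Bset e c k v -> (e v (c r) <-> c r = c k).
Proof.
move=> B; split; first by move=> h; apply/B; split=> //; exists r.
by move/B => [_].
Qed.

Lemma A_inC (k r : int) v : Aset e c k v -> v = c r -> v = c k.
Proof.
have hm := m5.
move=> A vr; subst v.
have h1 : e (c r) (c (r + 1)) by apply/e_ccE; left.
have h2 : e (c r) (c (r - 1)) by apply/e_ccE; right.
case/(A_nbr _ A): h1 => h1.
  have h3 := c_shift (-2) h1.
  case/(A_nbr _ A): h2 => h2; exfalso.
  - have : c (r + 1 + -2) = c (r - 1) by congr c; lia.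
    rewrite h3 h2 => /c_eq_sm; move=> h; have: (k - 1 + -2 = k - 1) by apply: h; lia.
    lia.
  - have : c (r + 1 + -2) = c (r - 1) by congr c; lia.
    rewrite h3 h2 => /c_eq_sm; move=> h; have: (k - 1 + -2 = k + 1) by apply: h; lia.
    lia.
have h3 := c_shift (-1) h1.
have -> : c r = c (r + 1 + -1) by congr c; lia.
by rewrite h3; congr c; lia.
Qed.

Lemma B_notC (k r : int) v : Bset e c k v -> v <> c r.
Proof.
have hm := m5.
move=> B vr; subst v.
have h1 : e (c r) (c (r + 1)) by apply/e_ccE; left.
have h2 : e (c r) (c (r - 1)) by apply/e_ccE; right.
move/(B_nbr _ B): h1 => h1; move/(B_nbr _ B): h2 => h2.
rewrite -h2 in h1; move/c_eq_sm: h1 => h; have : r + 1 = r - 1 by apply: h; lia.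
lia.
Qed.

Lemma c_eq_rng (r s : int) : - (2 * m%:Z) < r - s < 2 * m%:Z ->
  (c r = c s <-> (r - s = 0 \/ r - s = m%:Z \/ r - s = - m%:Z)).
Proof.
move=> b; have hm := m5.
case: (lerP (r - s) (- m%:Z)) => h1.
  have -> : c r = c s <-> c (r + m%:Z) = c s.
    by rewrite -{1}(c_per r 1) mul1r.
  rewrite c_eq_sm; last by lia.
  split; lia.
case: (ltrP (r - s) m%:Z) => h2.
  rewrite c_eq_sm; last by lia.
  split; lia.
have -> : c r = c s <-> c (r + (-1) * m%:Z) = c s by rewrite c_per.
rewrite c_eq_sm; last by lia.
split; lia.
Qed.

Hypothesis Htri : ~ induced_copy e (@cycle_rel 3).
Hypothesis Hshort : forall k : nat, (5 <= k < m)%N -> ~ induced_copy e (@cycle_rel k).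
Hypothesis Hm : (10 <= m)%N.

Lemma A_nbr_rng (k r : int) v : Aset e c k v -> - (2 * m%:Z) + 2 < r - k < 2 * m%:Z - 2 ->
  (e v (c r) <-> (r = k - 1 \/ r = k + 1 \/ r = k - 1 + m%:Z \/ r = k - 1 - m%:Z \/
                     r = k + 1 + m%:Z \/ r = k + 1 - m%:Z)).
Proof. move=> A b; rewrite (A_nbr _ A) !c_eq_rng; lia. Qed.

Lemma B_nbr_rng (k r : int) v : Bset e c k v -> - (2 * m%:Z) < r - k < 2 * m%:Z ->
  (e v (c r) <-> (r = k \/ r = k + m%:Z \/ r = k - m%:Z)).
Proof. move=> B b; rewrite (B_nbr _ B) !c_eq_rng; lia. Qed.

Lemma A_eqC_rng (k r : int) v : Aset e c k v -> - (2 * m%:Z) < r - k < 2 * m%:Z ->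
  v = c r -> (r = k \/ r = k + m%:Z \/ r = k - m%:Z).
Proof. move=> A b h; have := A_inC A h; rewrite h => /c_eq_rng; lia. Qed.

Lemma arc_bad (x y : T) (p : int) (L : nat) :
  (L = 0 \/ (2 <= L /\ L + 3 < m))%N ->
  e x y -> x <> y -> e x (c p) -> e y (c (p + L%:Z)) ->
  (forall r : nat, (0 < r <= L)%N -> ~ e x (c (p + r%:Z))) ->
  (forall r : nat, (r < L)%N -> ~ e y (c (p + r%:Z))) ->
  (forall r : nat, (r <= L)%N -> x <> c (p + r%:Z)) ->
  (forall r : nat, (r <= L)%N -> y <> c (p + r%:Z)) -> False.
Proof.
move=> hL exy nxy exp eyq nx ny dx dy.
have cp : induced_copy e (@cycle_rel (L + 3)).
  have hm := Hm; have hL2 : (L + 2 < m)%N by lia.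
  exact: (arc_copy hL2 exy nxy exp eyq nx ny dx dy).
case: hL => [L0|hL].
  by subst L; apply: Htri.
by apply: (Hshort (k := (L + 3)%N)) => //; lia.
Qed.

Lemma A_nbr_imp (k r : int) v : Aset e c k v -> e v (c r) ->
  - (2 * m%:Z) + 2 < r - k < 2 * m%:Z - 2 ->
  (r = k - 1 \/ r = k + 1 \/ r = k - 1 + m%:Z \/ r = k - 1 - m%:Z \/
                     r = k + 1 + m%:Z \/ r = k + 1 - m%:Z).
Proof. by move=> A h b; apply/(A_nbr_rng A b). Qed.

Lemma B_nbr_imp (k r : int) v : Bset e c k v -> e v (c r) -> - (2 * m%:Z) < r - k < 2 * m%:Z ->
  (r = k \/ r = k + m%:Z \/ r = k - m%:Z).
Proof. by move=> B h b; apply/(B_nbr_rng B b). Qed.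

Lemma A_eqC_imp (k r : int) v : Aset e c k v -> v = c r -> - (2 * m%:Z) < r - k < 2 * m%:Z ->
  (r = k \/ r = k + m%:Z \/ r = k - m%:Z).
Proof. by move=> A h b; apply: (A_eqC_rng A b h). Qed.

Lemma A_nbr_rev (k r : int) v : Aset e c k v -> - (2 * m%:Z) + 2 < r - k < 2 * m%:Z - 2 ->
  (r = k - 1 \/ r = k + 1 \/ r = k - 1 + m%:Z \/ r = k - 1 - m%:Z \/
                     r = k + 1 + m%:Z \/ r = k + 1 - m%:Z) -> e v (c r).
Proof. by move=> A b h; apply/(A_nbr_rng A b). Qed.

Lemma B_nbr_rev (k r : int) v : Bset e c k v -> - (2 * m%:Z) < r - k < 2 * m%:Z ->
  (r = k \/ r = k + m%:Z \/ r = k - m%:Z) -> e v (c r).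
Proof. by move=> B b h; apply/(B_nbr_rng B b). Qed.

Ltac posA H := apply: (A_nbr_rev H); lia.
Ltac posB H := apply: (B_nbr_rev H); lia.
Ltac negA H := let h := fresh "h" in move=> h; have := A_nbr_imp H h; lia.
Ltac negB H := let h := fresh "h" in move=> h; have := B_nbr_imp H h; lia.
Ltac neqA H := let h := fresh "h" in move=> h; have := A_eqC_imp H h; lia.
Ltac neqB H := let h := fresh "h" in move=> h; exact: (B_notC H h).
Ltac nxy_tac exy := let h := fresh "h" in move=> h; subst; by rewrite e_irr in exy.

Lemma edge_AA (k : int) (d : nat) x y : (d <= m - 3)%N -> Aset e c k x -> Aset e c (k + d%:Z) y ->
  e x y -> d = 1%N.
Proof.
move=> hd Ax Ay exy; have hm := Hm.
have nxy : x <> y by nxy_tac exy.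
case: (ltngtP d 1) => // hd1.
  have d0 : d = 0%N by lia.
  subst d; exfalso; apply: (arc_bad (p := k + 1) (L := 0)) exy nxy _ _ _ _ _ _.
  - by left.
  - posA Ax.
  - posA Ay.
  - move=> r hr; lia.
  - move=> r hr; lia.
  - move=> r hr; neqA Ax.
  - move=> r hr; neqA Ay.
case: (ltngtP d 3) => hd3.
-
  exfalso; apply: (arc_bad (p := k + 1) (L := 0)) exy nxy _ _ _ _ _ _.
  - by left.
  - posA Ax.
  - posA Ay.
  - move=> r hr; lia.
  - move=> r hr; lia.
  - move=> r hr; neqA Ax.
  - move=> r hr; neqA Ay.
-
  exfalso; apply: (arc_bad (p := k + 1) (L := (d - 2)%N)) exy nxy _ _ _ _ _ _.
  - right; lia.
  - posA Ax.
  - posA Ay.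
  - move=> r hr; negA Ax.
  - move=> r hr; negA Ay.
  - move=> r hr; neqA Ax.
  - move=> r hr; neqA Ay.
- (* d = 3 : long arc starting from y *)
  subst d; exfalso.
  have eyx : e y x by rewrite e_sym.
  have nyx : y <> x by move=> h; apply: nxy.
  apply: (arc_bad (p := k + 4 - m%:Z) (L := (m - 5)%N)) eyx nyx _ _ _ _ _ _.
  - right; lia.
  - posA Ay.
  - posA Ax.
  - move=> r hr; negA Ay.
  - move=> r hr; negA Ax.
  - move=> r hr; neqA Ay.
  - move=> r hr; neqA Ax.
Qed.

Lemma edge_AB (k : int) (d : nat) x y : (d <= m - 3)%N -> Aset e c k x -> Bset e c (k + d%:Z) y ->
  e x y -> (d = 0 \/ d = 2)%N.
Proof.
move=> hd Ax By exy; have hm := Hm.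
have nxy : x <> y by nxy_tac exy.
case: (ltngtP d 2) => hd2; [|exfalso|by right].
  case: (ltngtP d 1) => hd1; [left; lia|lia|exfalso].
  subst d; apply: (arc_bad (p := k + 1) (L := 0)) exy nxy _ _ _ _ _ _.
  - by left.
  - posA Ax.
  - posB By.
  - move=> r hr; lia.
  - move=> r hr; lia.
  - move=> r hr; neqA Ax.
  - move=> r hr; neqB By.
apply: (arc_bad (p := k + 1) (L := (d - 1)%N)) exy nxy _ _ _ _ _ _.
- right; lia.
- posA Ax.
- posB By.
- move=> r hr; negA Ax.
- move=> r hr; negB By.
- move=> r hr; neqA Ax.
- move=> r hr; neqB By.
Qed.

Lemma edge_BA (k : int) (d : nat) x y : (d <= m - 3)%N -> Bset e c k x -> Aset e c (k + d%:Z) y ->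
  e x y -> (d = 0 \/ d = 2)%N.
Proof.
move=> hd Bx Ay exy; have hm := Hm.
have nxy : x <> y by nxy_tac exy.
case: (ltngtP d 2) => hd2; [|exfalso|by right].
  case: (ltngtP d 1) => hd1; [left; lia|lia|exfalso].
  subst d; apply: (arc_bad (p := k) (L := 0)) exy nxy _ _ _ _ _ _.
  - by left.
  - posB Bx.
  - posA Ay.
  - move=> r hr; lia.
  - move=> r hr; lia.
  - move=> r hr; neqB Bx.
  - move=> r hr; neqA Ay.
apply: (arc_bad (p := k) (L := (d - 1)%N)) exy nxy _ _ _ _ _ _.
- right; lia.
- posB Bx.
- posA Ay.
- move=> r hr; negB Bx.
- move=> r hr; negA Ay.
- move=> r hr; neqB Bx.
- move=> r hr; neqA Ay.
Qed.

Lemma edge_BB (k : int) (d : nat) x y : (d <= m - 3)%N -> Bset e c k x -> Bset e c (k + d%:Z) y ->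
  e x y -> d = 1%N.
Proof.
move=> hd Bx By exy; have hm := Hm.
have nxy : x <> y by nxy_tac exy.
case: (ltngtP d 1) => // hd1; exfalso.
  have d0 : d = 0%N by lia.
  subst d; apply: (arc_bad (p := k) (L := 0)) exy nxy _ _ _ _ _ _.
  - by left.
  - posB Bx.
  - posB By.
  - move=> r hr; lia.
  - move=> r hr; lia.
  - move=> r hr; neqB Bx.
  - move=> r hr; neqB By.
case: (ltngtP d (m - 3)) => hd3; last first.
- have eyx : e y x by rewrite e_sym.
  have nyx : y <> x by move=> h; apply: nxy.
  apply: (arc_bad (p := k - 3) (L := 3)) eyx nyx _ _ _ _ _ _.
  - right; lia.
  - posB By.
  - posB Bx.
  - move=> r hr; negB By.
  - move=> r hr; negB Bx.
  - move=> r hr; neqB By.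
  - move=> r hr; neqB Bx.
- lia.
apply: (arc_bad (p := k) (L := d)) exy nxy _ _ _ _ _ _.
- right; lia.
- posB Bx.
- posB By.
- move=> r hr; negB Bx.
- move=> r hr; negB By.
- move=> r hr; neqB Bx.
- move=> r hr; neqB By.
Qed.

Lemma copy_tf (k : nat) (h : rel 'I_k) (f : 'I_k -> T) :
  (forall a b, a <> b -> exists z, h a z <> h b z) ->
  (forall a b, e (f a) (f b) = h a b) -> induced_copy e h.
Proof.
move=> tf fe; exists f; split=> // a b fab; apply: NNPP => nab.
have [z hz] := tf a b nab; apply: hz; by rewrite -!fe fab.
Qed.

Lemma e_cc_pos (r s : int) : - m%:Z < r - s < m%:Z ->
  (r - s = 1 \/ s - r = 1 \/ r - s = m%:Z - 1 \/ s - r = m%:Z - 1) -> e (c r) (c s).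
Proof. by move=> b h; apply/(e_cc_sm b). Qed.

Lemma e_cc_neg (r s : int) : - m%:Z < r - s < m%:Z ->
  ~ (r - s = 1 \/ s - r = 1 \/ r - s = m%:Z - 1 \/ s - r = m%:Z - 1) -> ~ e (c r) (c s).
Proof. by move=> b h /(e_cc_sm b). Qed.

Ltac rhs_comp := match goal with |- _ = ?b => let b' := eval vm_compute in b in change b with b' end.

Ltac epos := match goal with
 | |- e (c _) (c _) = true => apply: e_cc_pos; lia
 | H : Aset e c _ ?v |- e ?v (c _) = true => apply: (A_nbr_rev H); lia
 | H : Bset e c _ ?v |- e ?v (c _) = true => apply: (B_nbr_rev H); lia
 | H : Aset e c _ ?v |- e (c _) ?v = true => rewrite e_sym; apply: (A_nbr_rev H); lia
 | H : Bset e c _ ?v |- e (c _) ?v = true => rewrite e_sym; apply: (B_nbr_rev H); lia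
 | H : is_true (e ?u ?v) |- e ?u ?v = true => exact H
 | H : is_true (e ?u ?v) |- e ?v ?u = true => rewrite e_sym; exact H
 end.

Ltac eneg := match goal with
 | |- ~ is_true (e (c _) (c _)) => apply: e_cc_neg; lia
 | H : Aset e c _ ?v |- ~ is_true (e ?v (c _)) => negA H
 | H : Bset e c _ ?v |- ~ is_true (e ?v (c _)) => negB H
 | H : Aset e c _ ?v |- ~ is_true (e (c _) ?v) => rewrite e_sym; negA H
 | H : Bset e c _ ?v |- ~ is_true (e (c _) ?v) => rewrite e_sym; negB H
 | H : ~ is_true (e ?u ?v) |- ~ is_true (e ?u ?v) => exact H
 | H : ~ is_true (e ?u ?v) |- ~ is_true (e ?v ?u) => rewrite e_sym; exact H
 end.

Ltac esolve := match goal with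
 | |- _ = false => first [by rewrite e_irr | apply/negbTE/negP; eneg]
 | |- _ = true => epos
 end.

Lemma X2_tf (a b : 'I_7) : a <> b -> exists z, X2 a z <> X2 b z.
Proof.
move: a b => [[|[|[|[|[|[|[|//]]]]]]] ha] [[|[|[|[|[|[|[|//]]]]]]] hb] hab.
all: try (exfalso; apply: hab; congr Ordinal; apply: bool_irrelevance).
all: first [ by exists (@Ordinal 7 0 isT) | by exists (@Ordinal 7 1 isT) | by exists (@Ordinal 7 2 isT)
  | by exists (@Ordinal 7 3 isT) | by exists (@Ordinal 7 4 isT) | by exists (@Ordinal 7 5 isT) | by exists (@Ordinal 7 6 isT)].
Qed.

Lemma C6_tf (a b : 'I_6) : a <> b -> exists z, cycle_rel a z <> cycle_rel b z.
Proof.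
move: a b => [[|[|[|[|[|[|//]]]]]] ha] [[|[|[|[|[|[|//]]]]]] hb] hab.
all: try (exfalso; apply: hab; congr Ordinal; apply: bool_irrelevance).
all: first [ by exists (@Ordinal 6 0 isT) | by exists (@Ordinal 6 1 isT) | by exists (@Ordinal 6 2 isT)
  | by exists (@Ordinal 6 3 isT) | by exists (@Ordinal 6 4 isT) | by exists (@Ordinal 6 5 isT)].
Qed.

Hypothesis HX2 : ~ induced_copy e X2.

Ltac enum7 := move=> [[|[|[|[|[|[|[|//]]]]]]] ?] [[|[|[|[|[|[|[|//]]]]]]] ?] /=; rhs_comp.
Ltac enum6 := move=> [[|[|[|[|[|[|//]]]]]] ?] [[|[|[|[|[|[|//]]]]]] ?] /=; rhs_comp.

Lemma complete_AB (k : int) a b : Aset e c k a -> Bset e c k b -> e a b.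
Proof.
move=> Aa Bb; apply: NNPP => nab; have hm := Hm; apply: HX2.
apply: (copy_tf X2_tf (f := fun z : 'I_7 =>
   nth a [:: c (k - 1); c k; c (k + 1); a; c (k - 2); b; c (k + 2)] z)).
enum7; esolve.
Qed.

Lemma AsetE (k l : int) v : k = l -> Aset e c k v -> Aset e c l v.
Proof. by move=> ->. Qed.
Lemma BsetE (k l : int) v : k = l -> Bset e c k v -> Bset e c l v.
Proof. by move=> ->. Qed.

Lemma C6_bad : ~ induced_copy e (@cycle_rel 6).
Proof. apply: Hshort; have := Hm; lia. Qed.

Lemma R2_AL (k : int) x b a : Aset e c k x -> Bset e c (k - 2) b -> e x b ->
  Aset e c (k - 1) a -> e x a.
Proof.
move=> Ax Bb exb Aa; apply: NNPP => nxa; have hm := Hm.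
have nba : ~ e b a.
  move=> eba; have := edge_BA (k := k - 2) (d := 1) _ Bb (AsetE _ Aa) eba.
  by move=> H; have := H ltac:(lia) ltac:(lia); lia.
apply: C6_bad.
apply: (copy_tf C6_tf (f := fun z : 'I_6 =>
   nth x [:: x; b; c (k - 2); a; c k; c (k + 1)] z)).
enum6; esolve.
Qed.

Lemma R2_AR (k : int) x b a : Aset e c k x -> Bset e c (k + 2) b -> e x b ->
  Aset e c (k + 1) a -> e x a.
Proof.
move=> Ax Bb exb Aa; apply: NNPP => nxa; have hm := Hm.
have nab : ~ e a b.
  move=> eab; have := edge_AB (k := k + 1) (d := 1) _ Aa (BsetE _ Bb) eab.
  by move=> H; have := H ltac:(lia) ltac:(lia); lia.
apply: C6_bad.
apply: (copy_tf C6_tf (f := fun z : 'I_6 =>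
   nth x [:: x; b; c (k + 2); a; c k; c (k - 1)] z)).
enum6; esolve.
Qed.

Lemma R2_BL (k : int) u a b : Bset e c k u -> Aset e c (k - 2) a -> e u a ->
  Bset e c (k - 1) b -> e u b.
Proof.
move=> Bu Aa eua Bb; apply: NNPP => nub; have hm := Hm.
have nab : ~ e a b.
  move=> eab; have := edge_AB (k := k - 2) (d := 1) _ Aa (BsetE _ Bb) eab.
  by move=> H; have := H ltac:(lia) ltac:(lia); lia.
apply: HX2.
apply: (copy_tf X2_tf (f := fun z : 'I_7 =>
   nth u [:: a; c (k - 1); c k; u; c (k - 3); b; c (k + 1)] z)).
enum7; esolve.
Qed.

Lemma R2_BR (k : int) u a b : Bset e c k u -> Aset e c (k + 2) a -> e u a ->
  Bset e c (k + 1) b -> e u b.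
Proof.
move=> Bu Aa eua Bb; apply: NNPP => nub; have hm := Hm.
have nba : ~ e b a.
  move=> eba; have := edge_BA (k := k + 1) (d := 1) _ Bb (AsetE _ Aa) eba.
  by move=> H; have := H ltac:(lia) ltac:(lia); lia.
apply: HX2.
apply: (copy_tf X2_tf (f := fun z : 'I_7 =>
   nth u [:: a; c (k + 1); c k; u; c (k + 3); b; c (k - 1)] z)).
enum7; esolve.
Qed.

Variables i j : int.
Hypothesis Hji : j - i = m%:Z - 3.

Definition isB (b : bool) (n : nat) : bool := odd n (+) b.
Definition Blk (b : bool) (n : nat) (v : T) : Prop :=
  if isB b n then Bset e c (i + n%:Z) v else Aset e c (i + n%:Z) v.
Definition Cls (b : bool) (v : T) : Prop := exists n, (n <= m - 3)%N /\ Blk b n v.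

Lemma Abig_iff v : Abig e c i j v <-> Cls false v.
Proof.
split; move=> [n [hn H]]; exists n; (split; first by lia);
  by move: H; rewrite /Blk /isB addbF.
Qed.

Lemma Bbig_iff v : Bbig e c i j v <-> Cls true v.
Proof.
split; move=> [n [hn H]]; exists n; (split; first by lia);
  by move: H; rewrite /Blk /isB addbT; case: (odd n).
Qed.

Lemma blk_uniq b b' n n' v : (n <= m - 3)%N -> (n' <= m - 3)%N ->
  Blk b n v -> Blk b' n' v -> n = n' /\ b = b'.
Proof.
move=> hn hn' H1 H2; have hm := Hm.
have E : n = n'.
  move: H1 H2.
  rewrite /Blk; case: (isB b n); case: (isB b' n') => H1 H2.
  - have e1 : e v (c (i + n%:Z)) by posB H1.
    have := B_nbr_imp H2 e1; lia.
  - have e1 : e v (c (i + n'%:Z + 1)) by posA H2.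
    have e2 : e v (c (i + n'%:Z - 1)) by posA H2.
    have := B_nbr_imp H1 e1; have := B_nbr_imp H1 e2; lia.
  - have e1 : e v (c (i + n%:Z + 1)) by posA H1.
    have e2 : e v (c (i + n%:Z - 1)) by posA H1.
    have := B_nbr_imp H2 e1; have := B_nbr_imp H2 e2; lia.
  - have e1 : e v (c (i + n%:Z + 1)) by posA H1.
    have e2 : e v (c (i + n%:Z - 1)) by posA H1.
    have := A_nbr_imp H2 e1; have := A_nbr_imp H2 e2; lia.
subst n'; split=> //; move: H1 H2; rewrite /Blk /isB.
case: b; case: b'; case: (odd n) => //= H1 H2; exfalso.
all: try (have e1 : e v (c (i + n%:Z + 1)) by posA H1); try (have := B_nbr_imp H2 e1; lia).
all: have e1 : e v (c (i + n%:Z + 1)) by posA H2.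
all: have := B_nbr_imp H1 e1; lia.
Qed.

Lemma Cls_disj v : ~ (Cls false v /\ Cls true v).
Proof.
by case=> [[n [hn H]] [n' [hn' H']]]; have [_ ] := blk_uniq hn hn' H H'.
Qed.

Definition o (v : T) : nat :=
  match excluded_middle_informative
          (exists n, (n <= m - 3)%N /\ (Blk false n v \/ Blk true n v)) with
  | left h => proj1_sig (constructive_indefinite_description _ h)
  | right _ => 0%N
  end.

Lemma oE b n v : (n <= m - 3)%N -> Blk b n v -> o v = n.
Proof.
move=> hn H; rewrite /o; case: excluded_middle_informative => [h|h]; last first.
  by exfalso; apply: h; exists n; split=> //; move: H; case: b; [right|left].
case: (constructive_indefinite_description _ h) => n' /= [hn' H'].
by case: H' => H'; have [] := blk_uniq hn' hn H' H.
Qed.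

Lemma Cls_o b v : Cls b v -> (o v <= m - 3)%N /\ Blk b (o v) v.
Proof. by case=> n [hn H]; rewrite (oE hn H). Qed.

Lemma edge_blk b b' n n' x y : (n <= m - 3)%N -> (n' <= m - 3)%N ->
  Blk b n x -> Blk b' n' y -> e x y -> b' = ~~ b /\ (n' <= n + 2)%N /\ (n <= n' + 2)%N.
Proof.
wlog le : b b' n n' x y / (n <= n')%N.
  move=> W hn hn' Bx By exy; case: (leqP n n') => h; first by apply: (W b b' n n' x y h).
  rewrite e_sym in exy; have [E [h1 h2]] := W b' b n' n y x (ltnW h) hn' hn By Bx exy.
  by split; [rewrite E negbK | lia].
move=> hn hn' Bx By exy.
have hd : (n' - n <= m - 3)%N by lia.
have En : (i + n'%:Z = i + n%:Z + (n' - n)%N%:Z) by lia.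
move: Bx By; rewrite /Blk; case Eb: (isB b n); case Eb': (isB b' n') => Hx Hy.
- have := edge_BB hd Hx (BsetE En Hy) exy => d1.
  have En' : n' = (n + 1)%N by lia.
  move: Eb Eb'; rewrite /isB En' oddD /=.
  by case: b; case: b'; case: (odd n) => //=; split=> //; lia.
- have := edge_BA hd Hx (AsetE En Hy) exy => d1.
  have [En'|En'] : n' = n \/ n' = (n + 2)%N by lia.
  + move: Eb Eb'; rewrite /isB En'.
    by case: b; case: b'; case: (odd n) => //=; split=> //; lia.
  + move: Eb Eb'; rewrite /isB En' oddD /=.
    by case: b; case: b'; case: (odd n) => //=; split=> //; lia.
- have := edge_AB hd Hx (BsetE En Hy) exy => d1.
  have [En'|En'] : n' = n \/ n' = (n + 2)%N by lia.
  + move: Eb Eb'; rewrite /isB En'.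
    by case: b; case: b'; case: (odd n) => //=; split=> //; lia.
  + move: Eb Eb'; rewrite /isB En' oddD /=.
    by case: b; case: b'; case: (odd n) => //=; split=> //; lia.
- have := edge_AA hd Hx (AsetE En Hy) exy => d1.
  have En' : n' = (n + 1)%N by lia.
  move: Eb Eb'; rewrite /isB En' oddD /=.
  by case: b; case: b'; case: (odd n) => //=; split=> //; lia.
Qed.

Variables ltA ltB : int -> T -> T -> Prop.
Hypothesis Hlin : linear_extensions e c m ltA ltB.

Definition bo (b : bool) (n : nat) (x y : T) : Prop :=
  if isB b n then ltB (i + n%:Z) x y else ltA (i + n%:Z) x y.
Definition lex (b : bool) (x y : T) : Prop :=
  Cls b x /\ Cls b y /\ ((o x < o y)%N \/ (o x = o y /\ bo b (o x) x y)).

Lemma linA k : strict_linear_on (Aset e c k) (ltA k).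
Proof. by case: Hlin => _ [_ [H _]]; case: (H k). Qed.
Lemma linB k : strict_linear_on (Bset e c k) (ltB k).
Proof. by case: Hlin => _ [_ [_ H]]; case: (H k). Qed.
Lemma extA k u v : Aset e c k u -> Aset e c k v -> preA e c k u v -> ltA k u v.
Proof. by case: Hlin => _ [_ [H _]]; case: (H k) => _; apply. Qed.
Lemma extB k u v : Bset e c k u -> Bset e c k v -> preB e c k u v -> ltB k u v.
Proof. by case: Hlin => _ [_ [_ H]]; case: (H k) => _; apply. Qed.

Lemma blk_lin b n : strict_linear_on (Blk b n) (bo b n).
Proof. rewrite /Blk /bo; case: (isB b n); [exact: linB | exact: linA]. Qed.

Lemma lin_asym (S : T -> Prop) (lt : T -> T -> Prop) x y : strict_linear_on S lt ->
  S x -> S y -> lt x y -> ~ lt y x.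
Proof. by case=> irr [tr _] Sx Sy l1 l2; apply: (irr x Sx); apply: (tr x y x). Qed.

Lemma lex_lin b : strict_linear_on (Cls b) (lex b).
Proof.
split.
  move=> x Cx [_ [_ [h|[_ h]]]]; first by rewrite ltnn in h.
  have [_ Bx] := Cls_o Cx; case: (blk_lin b (o x)) => irr _; exact: irr x Bx h.
split.
  move=> x y z Cx Cy Cz [_ [_ h1]] [_ [_ h2]]; split=> //; split=> //.
  case: h1 => [h1|[e1 h1]]; case: h2 => [h2|[e2 h2]].
  - left; lia.
  - left; lia.
  - left; lia.
  - right; split; first by rewrite e1 e2.
    have [_ Bx] := Cls_o Cx; have [_ By] := Cls_o Cy; have [_ Bz] := Cls_o Cz.
    rewrite -e1 in By h2; rewrite -e2 -e1 in Bz.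
    case: (blk_lin b (o x)) => _ [tr _]; exact: (tr x y z).
move=> x y Cx Cy nxy.
case: (ltngtP (o x) (o y)) => h.
- by left; split=> //; split=> //; left.
- by right; split=> //; split=> //; left.
- have [_ Bx] := Cls_o Cx; have [_ By] := Cls_o Cy; rewrite -h in By.
  case: (blk_lin b (o x)) => _ [_ tot]; case: (tot x y Bx By nxy) => l.
  + by left; split=> //; split=> //; right.
  + by right; split=> //; split=> //; right; split=> //; rewrite -h.
Qed.

Lemma isB_neg b n : isB (~~ b) n = ~~ isB b n.
Proof. by rewrite /isB addbN. Qed.
Lemma isB_1 b n : isB b (n + 1) = ~~ isB b n.
Proof. by rewrite /isB oddD /= addbT addNb. Qed.
Lemma isB_2 b n : isB b (n + 2) = isB b n.
Proof. by rewrite /isB oddD /= addbF. Qed.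

Lemma BlkA b n v : isB b n = false -> Blk b n v -> Aset e c (i + n%:Z) v.
Proof. by rewrite /Blk => ->. Qed.
Lemma BlkB b n v : isB b n = true -> Blk b n v -> Bset e c (i + n%:Z) v.
Proof. by rewrite /Blk => ->. Qed.
Lemma boA b n x y : isB b n = false -> bo b n x y -> ltA (i + n%:Z) x y.
Proof. by rewrite /bo => ->. Qed.
Lemma boB b n x y : isB b n = true -> bo b n x y -> ltB (i + n%:Z) x y.
Proof. by rewrite /bo => ->. Qed.

Lemma side_lem b : side e o (Cls b) (Cls (~~ b)) (lex (~~ b)).
Proof.
have hm := Hm.
constructor.
- move=> x x' Cx Cx' exx; have [hx Bx] := Cls_o Cx; have [hx' Bx'] := Cls_o Cx'.
  by have [E _] := edge_blk hx hx' Bx Bx' exx; case: b E Cx Cx' Bx Bx'.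
- move=> x y Cx Cy exy; have [hx Bx] := Cls_o Cx; have [hy By] := Cls_o Cy.
  by have [_ E] := edge_blk hx hy Bx By exy.
- move=> x y Cx Cy Exy; have [hx Bx] := Cls_o Cx; have [hy By] := Cls_o Cy.
  rewrite -Exy in By.
  case Eb: (isB b (o x)).
  + have Hx := BlkB Eb Bx.
    have Hy : Aset e c (i + (o x)%:Z) y by apply: (BlkA _ By); rewrite isB_neg Eb.
    by rewrite e_sym; apply: (complete_AB Hy Hx).
  + have Hx := BlkA Eb Bx.
    have Hy : Bset e c (i + (o x)%:Z) y by apply: (BlkB _ By); rewrite isB_neg Eb.
    exact: (complete_AB Hx Hy).
- move=> v z z' Cv Cz Cz' Ezz [_ [_ [l|[_ l]]]] lvz evz'; first by rewrite Ezz ltnn in l.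
  have [hv Bv] := Cls_o Cv; have [hz Bz] := Cls_o Cz; have [hz' Bz'] := Cls_o Cz'.
  rewrite -Ezz in Bz'.
  have [_ [r1 r2]] := edge_blk hv hz Bv Bz' evz'.
  apply: NNPP => nvz.
  have [E|E] : o z = (o v + 1)%N \/ o z = (o v + 2)%N by lia.
  + case Eb: (isB (~~ b) (o z)).
    * have Z := BlkB Eb Bz; have Z' := BlkB Eb Bz'; have L := boB Eb l.
      have Ev : isB b (o v) = true by move: Eb; rewrite E isB_neg isB_1 negbK.
      have V : Bset e c (i + (o z)%:Z - 1) v by apply: BsetE (BlkB Ev Bv); lia.
      apply: (lin_asym (linB _) Z Z' L); apply: extB => //.
      by left; exists v; split; [right|split].
    * have Z := BlkA Eb Bz; have Z' := BlkA Eb Bz'; have L := boA Eb l.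
      have Ev : isB b (o v) = false by move: Eb; rewrite E isB_neg isB_1 negbK.
      have V : Aset e c (i + (o z)%:Z - 1) v by apply: AsetE (BlkA Ev Bv); lia.
      apply: (lin_asym (linA _) Z Z' L); apply: extA => //.
      by left; exists v; split; [right|split].
  + case Eb: (isB (~~ b) (o z)).
    * have Z := BlkB Eb Bz; have Z' := BlkB Eb Bz'; have L := boB Eb l.
      have Ev : isB b (o v) = false by move: Eb; rewrite E isB_neg isB_2 => /negbTE.
      have V : Aset e c (i + (o z)%:Z - 2) v by apply: AsetE (BlkA Ev Bv); lia.
      apply: (lin_asym (linB _) Z Z' L); apply: extB => //.
      by left; exists v; split; [left|split].
    * have Z := BlkA Eb Bz; have Z' := BlkA Eb Bz'; have L := boA Eb l.
      have Ev : isB b (o v) = true by move: Eb; rewrite E isB_neg isB_2 => /negbFE.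
      have V : Bset e c (i + (o z)%:Z - 2) v by apply: BsetE (BlkB Ev Bv); lia.
      apply: (lin_asym (linA _) Z Z' L); apply: extA => //.
      by left; exists v; split; [left|split].
- move=> v z z' Cv Cz Cz' Ezz [_ [_ [l|[_ l]]]] lzv evz; first by rewrite Ezz ltnn in l.
  have [hv Bv] := Cls_o Cv; have [hz Bz] := Cls_o Cz; have [hz' Bz'] := Cls_o Cz'.
  rewrite -Ezz in Bz'.
  have [_ [r1 r2]] := edge_blk hv hz Bv Bz evz.
  apply: NNPP => nvz.
  have [E|E] : o v = (o z + 1)%N \/ o v = (o z + 2)%N by lia.
  + case Eb: (isB (~~ b) (o z)).
    * have Z := BlkB Eb Bz; have Z' := BlkB Eb Bz'; have L := boB Eb l.
      have Ev : isB b (o v) = true by move: Eb; rewrite E isB_1 isB_neg.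
      have V : Bset e c (i + (o z)%:Z + 1) v by apply: BsetE (BlkB Ev Bv); lia.
      apply: (lin_asym (linB _) Z Z' L); apply: extB => //.
      by right; exists v; split; [left|split].
    * have Z := BlkA Eb Bz; have Z' := BlkA Eb Bz'; have L := boA Eb l.
      have Ev : isB b (o v) = false by move: Eb; rewrite E isB_1 isB_neg.
      have V : Aset e c (i + (o z)%:Z + 1) v by apply: AsetE (BlkA Ev Bv); lia.
      apply: (lin_asym (linA _) Z Z' L); apply: extA => //.
      by right; exists v; split; [left|split].
  + case Eb: (isB (~~ b) (o z)).
    * have Z := BlkB Eb Bz; have Z' := BlkB Eb Bz'; have L := boB Eb l.
      have Ev : isB b (o v) = false by move: Eb; rewrite E isB_2 isB_neg => /negbTE.
      have V : Aset e c (i + (o z)%:Z + 2) v by apply: AsetE (BlkA Ev Bv); lia.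
      apply: (lin_asym (linB _) Z Z' L); apply: extB => //.
      by right; exists v; split; [right|split].
    * have Z := BlkA Eb Bz; have Z' := BlkA Eb Bz'; have L := boA Eb l.
      have Ev : isB b (o v) = true by move: Eb; rewrite E isB_2 isB_neg => /negbFE.
      have V : Bset e c (i + (o z)%:Z + 2) v by apply: BsetE (BlkB Ev Bv); lia.
      apply: (lin_asym (linA _) Z Z' L); apply: extA => //.
      by right; exists v; split; [right|split].
- move=> v z z' Cv Cz Cz' evz Ez Ez'.
  have [hv Bv] := Cls_o Cv; have [hz Bz] := Cls_o Cz; have [hz' Bz'] := Cls_o Cz'.
  rewrite Ez in Bz; rewrite Ez' in Bz'.
  case Eb: (isB b (o v)).
  + have V := BlkB Eb Bv.
    have Z : Aset e c (i + (o v)%:Z + 2) z.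
      by apply: AsetE (BlkA _ Bz); [lia | rewrite isB_neg isB_2 Eb].
    have Z' : Bset e c (i + (o v)%:Z + 1) z'.
      by apply: BsetE (BlkB _ Bz'); [lia | rewrite isB_neg isB_1 Eb].
    exact: (R2_BR V Z evz Z').
  + have V := BlkA Eb Bv.
    have Z : Bset e c (i + (o v)%:Z + 2) z.
      by apply: BsetE (BlkB _ Bz); [lia | rewrite isB_neg isB_2 Eb].
    have Z' : Aset e c (i + (o v)%:Z + 1) z'.
      by apply: AsetE (BlkA _ Bz'); [lia | rewrite isB_neg isB_1 Eb].
    exact: (R2_AR V Z evz Z').
- move=> v z z' Cv Cz Cz' evz Ez Ez'.
  have [hv Bv] := Cls_o Cv; have [hz Bz] := Cls_o Cz; have [hz' Bz'] := Cls_o Cz'.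
  have Ez'' : o z' = (o z + 1)%N by lia.
  rewrite Ez in Bv; rewrite Ez'' in Bz'.
  case Eb: (isB b (o z)).
  + have V : Bset e c (i + (o v)%:Z) v.
      by apply: BsetE (BlkB _ Bv); [lia | rewrite isB_2 Eb].
    have Z : Aset e c (i + (o v)%:Z - 2) z.
      by apply: AsetE (BlkA _ Bz); [lia | rewrite isB_neg Eb].
    have Z' : Bset e c (i + (o v)%:Z - 1) z'.
      by apply: BsetE (BlkB _ Bz'); [lia | rewrite isB_neg isB_1 Eb].
    exact: (R2_BL V Z evz Z').
  + have V : Aset e c (i + (o v)%:Z) v.
      by apply: AsetE (BlkA _ Bv); [lia | rewrite isB_2 Eb].
    have Z : Bset e c (i + (o v)%:Z - 2) z.
      by apply: BsetE (BlkB _ Bz); [lia | rewrite isB_neg Eb].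
    have Z' : Aset e c (i + (o v)%:Z - 1) z'.
      by apply: AsetE (BlkA _ Bz'); [lia | rewrite isB_neg isB_1 Eb].
    exact: (R2_AL V Z evz Z').
- by move=> y y' [Cy [Cy' h]]; split=> //; split=> //; case: h => [h|[h _]]; lia.
- move=> v Cv; have [hv Bv] := Cls_o Cv.
  case Eb: (isB b (o v)).
  + have V := BlkB Eb Bv; exists (c (i + (o v)%:Z)); split; last by posB V.
    exists (o v); split=> //.
    by rewrite /Blk isB_neg Eb; apply: cA.
  + have V := BlkA Eb Bv.
    case: (ltnP (o v) (m - 3)) => ht.
    * exists (c (i + (o v + 1)%N%:Z)); split; last by posA V.
      exists (o v + 1)%N; split; first by lia.
      by rewrite /Blk isB_neg isB_1 Eb; apply: cA.
    * have [s Es] : exists s, o v = (s + 1)%N by exists (o v - 1)%N; lia.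
      exists (c (i + s%:Z)); split; last by posA V.
      exists s; split; first by lia.
      have Es' : isB b s = true by move: Eb; rewrite Es isB_1 => /negbFE.
      by rewrite /Blk isB_neg Es'; apply: cA.
- move=> v [C1 C2]; move: C1 C2; case: b => /= C1 C2; apply: (@Cls_disj v); split=> //.
Qed.

Lemma A_idx (k l : int) v : Aset e c k v -> Aset e c l v -> c k = c l.
Proof.
move=> Ak Al.
have h1 : e v (c (k + 1)) by apply/(A_nbr _ Ak); right.
have h2 : e v (c (k - 1)) by apply/(A_nbr _ Ak); left.
have hm := m5.
case/(A_nbr _ Al): h1 => h1.
  exfalso; case/(A_nbr _ Al): h2 => h2.
  - have := c_shift (-2) h1; have -> : k + 1 + -2 = k - 1 by lia.
    rewrite h2 => /c_eq_sm; have -> : l - 1 + -2 = l - 3 by lia.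
    move=> h; have : l - 1 = l - 3 by apply: h; lia.
    lia.
  - have := c_shift (-2) h1; have -> : k + 1 + -2 = k - 1 by lia.
    rewrite h2 => /c_eq_sm; have -> : l - 1 + -2 = l - 3 by lia.
    move=> h; have : l + 1 = l - 3 by apply: h; lia.
    lia.
have := c_shift (-1) h1; have -> : k + 1 + -1 = k by lia.
by have -> : l + 1 + -1 = l by lia.
Qed.

Lemma B_idx (k l : int) v : Bset e c k v -> Bset e c l v -> c k = c l.
Proof.
move=> Bk Bl; have h1 : e v (c k) by apply/(B_nbr _ Bk).
by move/(B_nbr _ Bl): h1.
Qed.

Lemma AB_excl (k l : int) v : Aset e c k v -> Bset e c l v -> False.
Proof.
move=> Ak Bl; have hm := m5.
have h1 : e v (c (k + 1)) by apply/(A_nbr _ Ak); right.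
have h2 : e v (c (k - 1)) by apply/(A_nbr _ Ak); left.
move/(B_nbr _ Bl): h1 => h1; move/(B_nbr _ Bl): h2 => h2.
rewrite -h2 in h1; move/c_eq_sm: h1 => h; have : k + 1 = k - 1 by apply: h; lia.
lia.
Qed.

Lemma c_eq_ex (k l : int) : c k = c l -> exists z : int, k = l + z * m%:Z.
Proof.
move/c_eq => h; exists ((k - l) %/ m%:Z)%Z.
have := divz_eq (k - l) m%:Z; rewrite h addr0 => E; lia.
Qed.

Lemma ltA_perN (k : int) (n : nat) x y : ltA (k + n%:Z * m%:Z) x y <-> ltA k x y.
Proof.
case: Hlin => H _.
elim: n k => [|n IH] k; first by rewrite mul0r addr0.
by rewrite -[n.+1]addn1 PoszD mulrDl mul1r addrA H IH.
Qed.
Lemma ltB_perN (k : int) (n : nat) x y : ltB (k + n%:Z * m%:Z) x y <-> ltB k x y.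
Proof.
case: Hlin => _ [H _].
elim: n k => [|n IH] k; first by rewrite mul0r addr0.
by rewrite -[n.+1]addn1 PoszD mulrDl mul1r addrA H IH.
Qed.

Lemma ltA_eq (k l : int) x y : c k = c l -> (ltA k x y <-> ltA l x y).
Proof.
move/c_eq_ex => [z ->]; case: z => n; first exact: ltA_perN.
rewrite -(ltA_perN _ n.+1); have -> : l + Negz n * m%:Z + n.+1%:Z * m%:Z = l by rewrite NegzE; lia.
by [].
Qed.
Lemma ltB_eq (k l : int) x y : c k = c l -> (ltB k x y <-> ltB l x y).
Proof.
move/c_eq_ex => [z ->]; case: z => n; first exact: ltB_perN.
rewrite -(ltB_perN _ n.+1); have -> : l + Negz n * m%:Z + n.+1%:Z * m%:Z = l by rewrite NegzE; lia.
by [].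
Qed.

Lemma Aset_eq (k l : int) v : c k = c l -> (Aset e c k v <-> Aset e c l v).
Proof.
move=> E; have E1 := c_shift 1 E; have E2 := c_shift (-1) E.
by rewrite /Aset E1 E2.
Qed.
Lemma Bset_eq (k l : int) v : c k = c l -> (Bset e c k v <-> Bset e c l v).
Proof. by move=> E; rewrite /Bset E. Qed.

Lemma Cls_A b x (k : int) : Cls b x -> Aset e c k x ->
  isB b (o x) = false /\ c k = c (i + (o x)%:Z).
Proof.
move=> Cx Ax; have [hx Bx] := Cls_o Cx; move: Bx; rewrite /Blk.
case: (isB b (o x)) => Bx; first by case: (AB_excl Ax Bx).
by split=> //; apply: (A_idx Ax Bx).
Qed.
Lemma Cls_B b x (k : int) : Cls b x -> Bset e c k x ->
  isB b (o x) = true /\ c k = c (i + (o x)%:Z).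
Proof.
move=> Cx Bk; have [hx Bx] := Cls_o Cx; move: Bx; rewrite /Blk.
case: (isB b (o x)) => Bx; last by case: (AB_excl Bx Bk).
by split=> //; apply: (B_idx Bk Bx).
Qed.

Lemma prec_lex b x y : Cls b x -> Cls b y -> prec e c ltA ltB x y -> lex b x y.
Proof.
move=> Cx Cy [i' H]; have hm := Hm; split=> //; split=> //.
have [hx _] := Cls_o Cx; have [hy _] := Cls_o Cy.
case: H => [[Ax [Ay [l _]]]|[[Bx [By [l _]]]|[[[Ax _] [By _]]|[[[Ax _] [_ [Ay _]]]|[[Bx _] [Ay _]]]]]].
- have [Ex E1] := Cls_A Cx Ax; have [Ey E2] := Cls_A Cy Ay.
  have Eo : o x = o y.
    rewrite E1 in E2; move/c_eq_sm: E2 => h; have : i + (o x)%:Z = i + (o y)%:Z by apply: h; lia.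
    lia.
  right; split=> //; rewrite /bo Ex; apply/(ltA_eq _ _ E1); exact: l.
- have [Ex E1] := Cls_B Cx Bx; have [Ey E2] := Cls_B Cy By.
  have Eo : o x = o y.
    rewrite E1 in E2; move/c_eq_sm: E2 => h; have : i + (o x)%:Z = i + (o y)%:Z by apply: h; lia.
    lia.
  right; split=> //; rewrite /bo Ex; apply/(ltB_eq _ _ E1); exact: l.
- have [Ex E1] := Cls_A Cx Ax; have [Ey E2] := Cls_B Cy By.
  have := c_shift 1 E1; rewrite E2 => /c_eq_rng h; left.
  have : i + (o y)%:Z - (i + (o x)%:Z + 1) = 0 \/ i + (o y)%:Z - (i + (o x)%:Z + 1) = m%:Z \/
     i + (o y)%:Z - (i + (o x)%:Z + 1) = - m%:Z by apply: h; lia.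
  lia.
- have [Ex E1] := Cls_A Cx Ax; have [Ey E2] := Cls_A Cy Ay.
  have := c_shift 2 E1; rewrite E2 => /c_eq_rng h; left.
  have : i + (o y)%:Z - (i + (o x)%:Z + 2) = 0 \/ i + (o y)%:Z - (i + (o x)%:Z + 2) = m%:Z \/
     i + (o y)%:Z - (i + (o x)%:Z + 2) = - m%:Z by apply: h; lia.
  lia.
- have [Ex E1] := Cls_B Cx Bx; have [Ey E2] := Cls_A Cy Ay.
  have := c_shift 1 E1; rewrite E2 => /c_eq_rng h; left.
  have : i + (o y)%:Z - (i + (o x)%:Z + 1) = 0 \/ i + (o y)%:Z - (i + (o x)%:Z + 1) = m%:Z \/
     i + (o y)%:Z - (i + (o x)%:Z + 1) = - m%:Z by apply: h; lia.
  lia.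
Qed.

Definition Rb b := fun x y => Cls b x /\ Cls b y /\ prec e c ltA ltB x y.

Lemma ct_mono (R1 R2 : T -> T -> Prop) : (forall u w, R1 u w -> R2 u w) ->
  forall x y, clos_trans T R1 x y -> clos_trans T R2 x y.
Proof.
move=> H x y; elim=> [u w /H|u w z _ h1 _ h2]; first exact: t_step.
exact: (t_trans _ _ _ _ _ h1 h2).
Qed.

Lemma in_blk b n x y : (n <= m - 3)%N -> Blk b n x -> Blk b n y -> bo b n x y ->
  clos_trans T (Rb b) x y.
Proof.
move=> hn Bx By l; case Eb: (isB b n).
- have := consec_chain (linB (i + n%:Z)) (BlkB Eb Bx) (BlkB Eb By) (boB Eb l).
  apply: ct_mono => u w [Su [Sw H]]; split; first by exists n; split=> //; rewrite /Blk Eb.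
  split; first by exists n; split=> //; rewrite /Blk Eb.
  by exists (i + n%:Z); right; left.
- have := consec_chain (linA (i + n%:Z)) (BlkA Eb Bx) (BlkA Eb By) (boA Eb l).
  apply: ct_mono => u w [Su [Sw H]]; split; first by exists n; split=> //; rewrite /Blk Eb.
  split; first by exists n; split=> //; rewrite /Blk Eb.
  by exists (i + n%:Z); left.
Qed.

Lemma is_max_A b n k M : isB b n = false -> k = i + n%:Z ->
  is_max (Blk b n) (bo b n) M -> is_max (Aset e c k) (ltA k) M.
Proof.
move=> Eb -> [H1 H2]; split; first exact: BlkA Eb H1.
by move=> w Aw nw; apply: (boA Eb); apply: H2 => //; rewrite /Blk Eb.
Qed.
Lemma is_max_B b n k M : isB b n = true -> k = i + n%:Z ->
  is_max (Blk b n) (bo b n) M -> is_max (Bset e c k) (ltB k) M.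
Proof.
move=> Eb -> [H1 H2]; split; first exact: BlkB Eb H1.
by move=> w Aw nw; apply: (boB Eb); apply: H2 => //; rewrite /Blk Eb.
Qed.
Lemma is_min_A b n k M : isB b n = false -> k = i + n%:Z ->
  is_min (Blk b n) (bo b n) M -> is_min (Aset e c k) (ltA k) M.
Proof.
move=> Eb -> [H1 H2]; split; first exact: BlkA Eb H1.
by move=> w Aw nw; apply: (boA Eb); apply: H2 => //; rewrite /Blk Eb.
Qed.
Lemma is_min_B b n k M : isB b n = true -> k = i + n%:Z ->
  is_min (Blk b n) (bo b n) M -> is_min (Bset e c k) (ltB k) M.
Proof.
move=> Eb -> [H1 H2]; split; first exact: BlkB Eb H1.
by move=> w Aw nw; apply: (boB Eb); apply: H2 => //; rewrite /Blk Eb.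
Qed.

Lemma to_max b p x M : (p <= m - 3)%N -> Cls b x -> (o x <= p)%N ->
  is_max (Blk b p) (bo b p) M ->
  (forall x, Cls b x -> (o x < p)%N -> clos_trans T (Rb b) x M) ->
  x = M \/ clos_trans T (Rb b) x M.
Proof.
move=> hp Cx hxp HM IH; have [hx Bx] := Cls_o Cx.
case: (ltngtP (o x) p) => h; [by right; apply: IH | lia |].
case: (classic (x = M)) => [->|nxM]; first by left.
right; rewrite h in Bx; apply: (in_blk hp Bx HM.1); exact: HM.2.
Qed.

Lemma cross b N : forall n', (n' <= N)%N -> (n' <= m - 3)%N -> forall y, Blk b n' y ->
  forall x, Cls b x -> (o x < n')%N -> clos_trans T (Rb b) x y.
Proof.
have hm := Hm.
elim: N => [|N IH] n' hN hn' y By x Cx hx; first by lia.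
have [mn Hmn] := min_ex (blk_lin b n') (ex_intro _ y By).
have Cmn : Cls b mn by exists n'; split; [lia | exact: Hmn.1].
suff Hxm : clos_trans T (Rb b) x mn.
  case: (classic (y = mn)) => [->//|nym].
  exact: (t_trans _ _ _ _ _ Hxm (in_blk hn' Hmn.1 By (Hmn.2 y By nym))).
have [p En] : exists p, n' = (p + 1)%N by exists (n' - 1)%N; lia.
have [hxo Bxo] := Cls_o Cx.
case: (classic (exists v, Blk b p v)) => [Hne|Hemp].
- have [M HM] := max_ex (blk_lin b p) Hne.
  have CM : Cls b M by exists p; split; [lia | exact: HM.1].
  have RM : Rb b M mn.
    split=> //; split=> //; exists (i + p%:Z).
    rewrite En in Hmn; case Eb: (isB b p).
    + right; right; right; right; split.
        exact: (is_max_B Eb (erefl _) HM).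
      by apply: (is_min_A _ _ Hmn); [rewrite isB_1 Eb | lia].
    + right; right; left; split.
        exact: (is_max_A Eb (erefl _) HM).
      by apply: (is_min_B _ _ Hmn); [rewrite isB_1 Eb | lia].
  have hp : (p <= m - 3)%N by lia.
  have hxp : (o x <= p)%N by lia.
  have IHp : forall z, Cls b z -> (o z < p)%N -> clos_trans T (Rb b) z M.
    by move=> z Cz hz; apply: (IH p) => //; try lia; exact: HM.1.
  case: (to_max hp Cx hxp HM IHp).
  + by move=> ->; apply: t_step.
  + by move=> H; apply: (t_trans _ _ _ _ _ H); apply: t_step.
- have Eb : isB b p = true.
    apply: NNPP => /negP /negbTE Eb; apply: Hemp; exists (c (i + p%:Z)).
    by rewrite /Blk Eb; apply: cA.
  have hxp : (o x < p)%N.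
    case: (ltngtP (o x) p) => // h; first by lia.
    by case: Hemp; exists x; rewrite -h.
  have [q Ep] : exists q, p = (q + 1)%N by exists (p - 1)%N; lia.
  have Eq : isB b q = false by move: Eb; rewrite Ep isB_1 => /negbTE.
  have Bq : Blk b q (c (i + q%:Z)) by rewrite /Blk Eq; apply: cA.
  have [M HM] := max_ex (blk_lin b q) (ex_intro _ (c (i + q%:Z)) Bq).
  have CM : Cls b M by exists q; split; [lia | exact: HM.1].
  have RM : Rb b M mn.
    split=> //; split=> //; exists (i + q%:Z).
    right; right; right; left; split; first exact: (is_max_A Eq (erefl _) HM).
    split.
      move=> w Bw; apply: Hemp; exists w; rewrite /Blk Eb.
      by apply: (BsetE _ Bw); lia.
    rewrite En Ep in Hmn.
    by apply: (is_min_A _ _ Hmn); [rewrite isB_1 isB_1 Eq | lia].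
  have hq : (q <= m - 3)%N by lia.
  have hxq : (o x <= q)%N by lia.
  have IHq : forall z, Cls b z -> (o z < q)%N -> clos_trans T (Rb b) z M.
    by move=> z Cz hz; apply: (IH q) => //; try lia; exact: HM.1.
  case: (to_max hq Cx hxq HM IHq).
  + by move=> ->; apply: t_step.
  + by move=> H; apply: (t_trans _ _ _ _ _ H); apply: t_step.
Qed.

Lemma ltV_lex b x y : clos_trans T (Rb b) x y <-> lex b x y.
Proof.
split.
  elim=> [u w [Cu [Cw P]]|u w z _ h1 _ h2]; first exact: prec_lex.
  case: (lex_lin b) => _ [tr _]; apply: (tr u w z) => //; [exact: h1.1 | exact: h1.2.1 | exact: h2.2.1].
move=> [Cx [Cy [l|[E l]]]].
  have [hy By] := Cls_o Cy.
  exact: (cross (N := o y) (leqnn _) hy By Cx l).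
have [hx Bx] := Cls_o Cx; have [hy By] := Cls_o Cy; rewrite -E in By.
exact: (in_blk hx Bx By l).
Qed.
End Conc.

Unset Implicit Arguments.
Import Order.TTheory GRing.Theory Num.Theory.
Local Open Scope ring_scope.

Theorem lemma3p8 (T : finType) (e : rel T)
  (e_sym : forall x y : T, e x y = e y x) (e_irr : forall x : T, e x x = false)
  (Gconn : connected_graph e) (Gabp : almost_bip_perm e) (Ghole : has_hole e)
  (m : nat) (c : int -> T) (Cshort : shortest_hole e m c)
  (ltA ltB : int -> T -> T -> Prop)
  (Hlin : linear_extensions e c m ltA ltB)
  (i j : int) (Hij : i <= j) (Hji : j - i = m%:Z - 3) :
  let U := Abig e c i j in
  let W := Bbig e c i j in
  let ltU := ltV e c ltA ltB U in
  let ltW := ltV e c ltA ltB W in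
  bip_perm_classes e U W /\
  strict_linear_on U ltU /\ strict_linear_on W ltW /\
  adjacency_prop e U W ltW /\ enclosure_prop e U W ltW /\
  adjacency_prop e W U ltU /\ enclosure_prop e W U ltU.
Proof.
move=> U W ltU ltW.
case: Cshort => Hhole Hsh.
case: Gabp => nT2 [nX2 [nX3 [ntri nC]]].
have Hm := m10 Hhole ntri nC.
have EU : U = Cls e m c i false.
  apply: functional_extensionality => v; apply: propositional_extensionality.
  exact: (Abig_iff e c Hm Hji).
have EW : W = Cls e m c i true.
  apply: functional_extensionality => v; apply: propositional_extensionality.
  exact: (Bbig_iff e c Hm Hji).
have ElU : ltU = lex e m c i ltA ltB false.
  apply: functional_extensionality => x; apply: functional_extensionality => y.
  apply: propositional_extensionality; rewrite /ltU /ltV EU.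
  exact: (ltV_lex Hhole Hm Hji Hlin false x y).
have ElW : ltW = lex e m c i ltA ltB true.
  apply: functional_extensionality => x; apply: functional_extensionality => y.
  apply: propositional_extensionality; rewrite /ltW /ltV EW.
  exact: (ltV_lex Hhole Hm Hji Hlin true x y).
have sF := side_lem e_sym e_irr Hhole ntri Hsh Hm nX2 Hji Hlin false.
have sT := side_lem e_sym e_irr Hhole ntri Hsh Hm nX2 Hji Hlin true.
have linF := lex_lin Hhole Hm Hji Hlin false.
have linT := lex_lin Hhole Hm Hji Hlin true.
simpl in sF, sT.
rewrite ElU ElW EU EW.
split.
  split; first by case: sF.
  split; first by case: sF.
  split; first by case: sT.
  exact: (perm_main e_sym sF sT linF linT).
split; first exact: linF.
split; first exact: linT.
split; first exact: (adj_side sF).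
split; first exact: (enc_side e_sym sF sT linF).
split; first exact: (adj_side sT).
exact: (enc_side e_sym sT sF linT).
Qed.
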